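(* Let $r\ge1$, $\mu\in\mathcal P_r$ and $1\le s\le r$. For every $n\in\mathbb N$ let $\mathbf x_n\in\Xi_n$ minimize $\mathbf y\mapsto d_s(\delta^{\mathbf u_n}_{\mathbf y},\mu)$ over $\Xi_n$ (a best uniform $s$-approximation). Then $\lim_{n\to\infty}d_r(\delta^{\mathbf u_n}_{\mathbf x_n},\mu)=0$. In particular, $\lim_{n\to\infty}d_r(\delta^{\mathbf u_n}_{\mathbf x_n},\mu)=0$ for $x_{n,i}=F_\mu^{-1}\big(\tfrac{2i-1}{2n}\big)$, $1\le i\le n$.
   Context: $\mathcal P$ denotes the set of Borel probability measures on $\mathbb R$; $\mathcal P_r=\{\mu\in\mathcal P:\int|x|^r{\rm d}\mu(x)<\infty\}$. For $\mu\in\mathcal P$, $F_\mu(x)=\mu(]-\infty,x])$ and $F_\mu^{-1}(t)=\sup\{x: F_\mu(x)\le t\}$, $t\in]0,1[$. $d_r(\mu,\nu)=\big(\int_0^1|F_\mu^{-1}(t)-F_\nu^{-1}(t)|^r{\rm d}t\big)^{1/r}$. $\Xi_n=\{\mathbf x\in\mathbb R^n:x_1\le\dots\le x_n\}$, $\mathbf u_n=(1/n,\dots,1/n)$, $\delta^{\mathbf u_n}_{\mathbf x}=\frac1n\sum_{i=1}^n\delta_{x_i}$. *)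

(* Defs.v *)
From Stdlib Require Import Reals Lra ClassicalEpsilon.
Open Scope R_scope.

(* Real power with the convention  rpow x y = 0  for x <= 0
   (we only use it for x >= 0, y > 0, where 0^y = 0). *)
Definition rpow (x y : R) : R := if Rle_dec x 0 then 0 else Rpower x y.

(* A Borel probability measure mu on R is represented by its distribution
   function F_mu : nondecreasing, right-continuous, F(-oo)=0, F(+oo)=1. *)
Definition is_cdf (F : R -> R) : Prop :=
  (forall x y, x <= y -> F x <= F y) /\
  (forall x eps, 0 < eps -> exists del, 0 < del /\
      forall y, x <= y < x + del -> Rabs (F y - F x) < eps) /\
  (forall eps, 0 < eps -> exists M, forall x, x <= - M -> F x < eps) /\
  (forall eps, 0 < eps -> exists M, forall x, M <= x -> 1 - eps < F x).

Definition qf (F : R -> R) (t : R) : R :=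
  epsilon (inhabits 0) (fun y => is_lub (fun x => F x <= t) y).

(* Integral over ]0,1[ of a (nonnegative) function, as the supremum of its
   Riemann integrals over compact subintervals [a,b] of ]0,1[. *)
Definition int01 (f : R -> R) (I : R) : Prop :=
  is_lub (fun v => exists a b (pr : Riemann_integrable f a b),
                     0 < a /\ a < b /\ b < 1 /\ v = RiemannInt pr) I.

(* d_r(mu,nu) = D  (D finite), mu, nu given by distribution functions. *)
Definition dist_r (r : R) (F G : R -> R) (D : R) : Prop :=
  exists I, int01 (fun t => rpow (Rabs (qf F t - qf G t)) r) I /\
            D = rpow I (/ r).

(* mu in P_r, i.e. int |x|^r dmu < oo, written via the quantile function
   (int |x|^r dmu = int_0^1 |F^{-1}(t)|^r dt). *)
Definition in_Pr (r : R) (F : R -> R) : Prop :=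
  exists I, int01 (fun t => rpow (Rabs (qf F t)) r) I.

Fixpoint cntle (x : nat -> R) (y : R) (n : nat) : R :=
  match n with
  | O => 0
  | S k => cntle x y k + (if Rle_dec (x k) y then 1 else 0)
  end.

(* distribution function of delta^{u_n}_x = (1/n) sum_{i<n} delta_{x_i} *)
Definition emp_cdf (n : nat) (x : nat -> R) (y : R) : R := cntle x y n / INR n.

(* x (indices 0..n-1) lies in Xi_n *)
Definition in_Xi (n : nat) (x : nat -> R) : Prop :=
  forall i j, (i <= j)%nat -> (j < n)%nat -> x i <= x j.

(* Main.v *)
Require Import Defs.
From Stdlib Require Import Reals Lra Lia List RList ZArith ClassicalEpsilon.
From Coquelicot Require Import Coquelicot.
Open Scope R_scope.
Implicit Types f : R -> R.

Lemma SF_ext (a b : R) (phi : StepFun a b) (g : R -> R) :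
  (forall x, Rmin a b < x < Rmax a b -> phi x = g x) ->
  exists pr : IsStepFun g a b, RiemannInt_SF (mkStepFun pr) = RiemannInt_SF phi.
Proof.
  destruct phi as [fe [l [lf Had]]]; simpl; intros Hext.
  assert (Had' : adapted_couple g a b l lf).
  { destruct Had as [Ho [H0 [H1 [Hl Hc]]]].
    split; [exact Ho|]. split; [exact H0|]. split; [exact H1|]. split; [exact Hl|].
    intros i Hi x Hx. unfold open_interval in Hx.
    rewrite <- (Hc i Hi x Hx). symmetry. apply Hext.
    assert (Hin1 : In (pos_Rl l i) l).
    { apply RList_P3. exists i. split; [reflexivity|]. lia. }
    assert (Hin2 : In (pos_Rl l (S i)) l).
    { apply RList_P3. exists (S i). split; [reflexivity|]. lia. }
    pose proof (RList_P5 l _ Ho Hin1). pose proof (RList_P7 l _ Ho Hin2).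
    rewrite H0 in *. rewrite H1 in *. lra. }
  exists (existT _ l (existT _ lf Had')). reflexivity.
Qed.

Definition approx (f : R -> R) (a b e : R) : Prop :=
  exists phi psi : StepFun a b,
    (forall t, a <= t <= b -> Rabs (f t - phi t) <= psi t) /\ RiemannInt_SF psi <= e.

Lemma approx_glue f a b c e1 e2 : a <= b -> b <= c ->
  approx f a b e1 -> approx f b c e2 -> approx f a c (e1 + e2).
Proof.
  intros Hab Hbc [phi1 [psi1 [H1 I1]]] [phi2 [psi2 [H2 I2]]].
  set (gphi := fun t => if Rle_dec t b then phi1 t else phi2 t).
  set (gpsi := fun t => if Rle_dec t b then psi1 t else psi2 t).
  assert (Hmin1 : Rmin a b = a) by (apply Rmin_left; lra).
  assert (Hmax1 : Rmax a b = b) by (apply Rmax_right; lra).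
  assert (Hmin2 : Rmin b c = b) by (apply Rmin_left; lra).
  assert (Hmax2 : Rmax b c = c) by (apply Rmax_right; lra).
  destruct (SF_ext a b phi1 gphi) as [pa _].
  { intros x Hx. unfold gphi. destruct (Rle_dec x b); [reflexivity|lra]. }
  destruct (SF_ext b c phi2 gphi) as [pb _].
  { intros x Hx. unfold gphi. destruct (Rle_dec x b); [lra|reflexivity]. }
  destruct (SF_ext a b psi1 gpsi) as [qa Eqa].
  { intros x Hx. unfold gpsi. destruct (Rle_dec x b); [reflexivity|lra]. }
  destruct (SF_ext b c psi2 gpsi) as [qb Eqb].
  { intros x Hx. unfold gpsi. destruct (Rle_dec x b); [lra|reflexivity]. }
  pose (PHI := mkStepFun (@StepFun_P41 gphi a b c Hab Hbc pa pb)).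
  pose (PSI := mkStepFun (@StepFun_P41 gpsi a b c Hab Hbc qa qb)).
  exists PHI, PSI. split.
  - intros t Ht. simpl. unfold gphi, gpsi.
    destruct (Rle_dec t b).
    + apply H1; lra.
    + apply H2; lra.
  - unfold PSI. rewrite <- (@StepFun_P43 gpsi a b c qa qb). rewrite Eqa, Eqb. lra.
Qed.

Lemma approx_base f a b : a <= b ->
  (forall u v, a <= u -> u <= v -> v <= b -> f u <= f v) ->
  approx f a b ((b - a) * (f b - f a)).
Proof.
  intros Hab Hm.
  exists (mkStepFun (StepFun_P4 a b (f a))), (mkStepFun (StepFun_P4 a b (f b - f a))).
  split.
  - intros t Ht. simpl. unfold fct_cte.
    pose proof (Hm a t ltac:(lra) ltac:(lra) ltac:(lra)).
    pose proof (Hm t b ltac:(lra) ltac:(lra) ltac:(lra)).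
    rewrite Rabs_right; lra.
  - rewrite StepFun_P18. lra.
Qed.

Lemma approx_N f : forall N a b, (1 <= N)%nat -> a <= b ->
  (forall u v, a <= u -> u <= v -> v <= b -> f u <= f v) ->
  approx f a b ((b - a) / INR N * (f b - f a)).
Proof.
  induction N as [|N IH]; intros a b HN Hab Hm; [lia|].
  destruct (Nat.eq_dec N 0) as [->|HN0].
  - replace ((b - a) / INR 1 * (f b - f a)) with ((b - a) * (f b - f a))
      by (simpl; field). apply approx_base; auto.
  - assert (HNr : 1 <= INR N) by (apply (le_INR 1); lia).
    rewrite S_INR.
    set (c := a + (b - a) / (INR N + 1)).
    assert (Hc1 : a <= c).
    { unfold c. assert (0 <= (b - a) / (INR N + 1)) by (apply Rdiv_le_0_compat; lra). lra. }
    assert (Hc2 : c <= b).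
    { unfold c. assert ((b - a) / (INR N + 1) <= b - a).
      { apply Rmult_le_reg_r with (INR N + 1); [lra|].
        unfold Rdiv; rewrite Rmult_assoc, Rinv_l by lra. nra. }
      lra. }
    assert (Hmono1 : f a <= f c) by (apply Hm; lra).
    assert (Hmono2 : f c <= f b) by (apply Hm; lra).
    pose proof (approx_base f a c Hc1 (fun u v h1 h2 h3 => Hm u v h1 h2 ltac:(lra))) as A1.
    pose proof (IH c b ltac:(lia) Hc2 (fun u v h1 h2 h3 => Hm u v ltac:(lra) h2 h3)) as A2.
    pose proof (approx_glue f a c b _ _ Hc1 Hc2 A1 A2) as A.
    replace ((b - a) / (INR N + 1) * (f b - f a)) with
      ((c - a) * (f c - f a) + (b - c) / INR N * (f b - f c)); [exact A|].
    unfold c. field. lra.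
Qed.

Lemma approx_integrable f a b : a <= b ->
  (forall e, 0 < e -> approx f a b e) -> Riemann_integrable f a b.
Proof.
  intros Hab H eps.
  assert (Hmin : Rmin a b = a) by (apply Rmin_left; lra).
  assert (Hmax : Rmax a b = b) by (apply Rmax_right; lra).
  assert (Hex : exists phi psi : StepFun a b,
    (forall t, Rmin a b <= t <= Rmax a b -> Rabs (f t - phi t) <= psi t) /\
    Rabs (RiemannInt_SF psi) < eps).
  { destruct (H (eps / 2)) as [phi [psi [H1 H2]]]. { destruct eps; simpl; lra. }
    exists phi, psi. split.
    - rewrite Hmin, Hmax. exact H1.
    - assert (0 <= RiemannInt_SF psi).
      { rewrite <- (Rmult_0_l (b - a)). rewrite <- (StepFun_P18 a b 0).
        apply StepFun_P37; auto. intros x Hx. simpl. unfold fct_cte.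
        pose proof (H1 x ltac:(lra)). pose proof (Rabs_pos (f x - phi x)). lra. }
      rewrite Rabs_right by lra. destruct eps; simpl in *; lra. }
  apply constructive_indefinite_description in Hex. destruct Hex as [phi Hphi].
  apply constructive_indefinite_description in Hphi. destruct Hphi as [psi Hpsi].
  exists phi. exists psi. exact Hpsi.
Qed.

Lemma mono_integrable f a b : a <= b ->
  (forall u v, a <= u -> u <= v -> v <= b -> f u <= f v) -> Riemann_integrable f a b.
Proof.
  intros Hab Hm. apply approx_integrable; auto. intros e He.
  assert (Hfab : f a <= f b) by (apply Hm; lra).
  set (K := (b - a) * (f b - f a)).
  assert (HK : 0 <= K) by (unfold K; nra).
  destruct (archimed (K / e)) as [Hup _].
  set (N := Z.to_nat (up (K / e))).
  assert (HN : K / e < INR (S N)).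
  { rewrite S_INR. unfold N. destruct (Z_lt_le_dec (up (K/e)) 0).
    - assert (IZR (up (K/e)) <= -1). { apply IZR_le. lia. }
      assert (0 <= K / e) by (apply Rdiv_le_0_compat; lra). lra.
    - rewrite INR_IZR_INZ, Z2Nat.id by lia. lra. }
  destruct (approx_N f (S N) a b ltac:(lia) Hab Hm) as [phi [psi [H1 H2]]].
  exists phi, psi. split; auto.
  assert (0 < INR (S N)) by (apply lt_0_INR; lia).
  assert ((b - a) / INR (S N) * (f b - f a) <= e).
  { replace ((b - a) / INR (S N) * (f b - f a)) with (K / INR (S N)) by (unfold K; field; lra).
    assert (HK2 : K < e * INR (S N)).
    { replace K with ((K / e) * e) by (field; lra).
      rewrite (Rmult_comm e). apply Rmult_lt_compat_r; lra. }
    apply Rmult_le_reg_r with (INR (S N)); [lra|].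
    unfold Rdiv. rewrite Rmult_assoc, Rinv_l by lra. lra. }
  lra.
Qed.

Lemma mono_ex_RInt f a b : a <= b ->
  (forall u v, a <= u -> u <= v -> v <= b -> f u <= f v) -> ex_RInt f a b.
Proof. intros. apply ex_RInt_Reals_1. apply mono_integrable; auto. Qed.

Lemma antimono_ex_RInt f a b : a <= b ->
  (forall u v, a <= u -> u <= v -> v <= b -> f v <= f u) -> ex_RInt f a b.
Proof.
  intros Hab Hm.
  assert (H : ex_RInt (fun t => - f t) a b).
  { apply mono_ex_RInt; auto. intros u v h1 h2 h3. pose proof (Hm u v h1 h2 h3). lra. }
  apply ex_RInt_opp in H. eapply ex_RInt_ext; [|exact H].
  intros x _. simpl. unfold opp; simpl. ring.
Qed.

Lemma rpow_ge0 x p : 0 <= rpow x p.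
Proof. unfold rpow. destruct (Rle_dec x 0); [lra|]. unfold Rpower. left; apply exp_pos. Qed.

Lemma rpow_pos x p : 0 < x -> 0 < rpow x p.
Proof. intros. unfold rpow. destruct (Rle_dec x 0); [lra|]. unfold Rpower. apply exp_pos. Qed.

Lemma rpow_0 p : rpow 0 p = 0.
Proof. unfold rpow. destruct (Rle_dec 0 0); lra. Qed.

Lemma rpow_nonpos x p : x <= 0 -> rpow x p = 0.
Proof. intros. unfold rpow. destruct (Rle_dec x 0); lra. Qed.

Lemma rpow_E x p : 0 < x -> rpow x p = Rpower x p.
Proof. intros. unfold rpow. destruct (Rle_dec x 0); [lra|reflexivity]. Qed.

Lemma rpow_le x y p : 0 <= p -> 0 <= x <= y -> rpow x p <= rpow y p.
Proof.
  intros Hp Hxy. destruct (Req_dec x 0) as [->|Hx].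
  - rewrite rpow_0. apply rpow_ge0.
  - rewrite !rpow_E by lra. apply Rle_Rpower_l; lra.
Qed.

Lemma rpow_lt x y p : 0 < p -> 0 <= x < y -> rpow x p < rpow y p.
Proof.
  intros Hp Hxy. destruct (Req_dec x 0) as [->|Hx].
  - rewrite rpow_0. apply rpow_pos. lra.
  - rewrite !rpow_E by lra. apply Rlt_Rpower_l; lra.
Qed.

Lemma rpow_le_inv x y p : 0 < p -> 0 <= x -> 0 <= y -> rpow x p <= rpow y p -> x <= y.
Proof.
  intros Hp Hx Hy H. destruct (Rle_lt_dec x y); auto.
  pose proof (rpow_lt y x p Hp ltac:(lra)). lra.
Qed.

Lemma rpow_mul x y p : 0 <= x -> 0 <= y -> rpow (x * y) p = rpow x p * rpow y p.
Proof.
  intros Hx Hy. destruct (Req_dec x 0) as [->|Hx0].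
  { rewrite Rmult_0_l, !rpow_0. ring. }
  destruct (Req_dec y 0) as [->|Hy0].
  { rewrite Rmult_0_r, !rpow_0. ring. }
  rewrite !rpow_E by nra. rewrite Rpower_mult_distr by lra. reflexivity.
Qed.

Lemma rpow_add_exp x p q : 0 <= x -> 0 < p -> 0 < q -> rpow x (p + q) = rpow x p * rpow x q.
Proof.
  intros Hx Hp Hq. destruct (Req_dec x 0) as [->|Hx0].
  { rewrite !rpow_0. ring. }
  rewrite !rpow_E by lra. apply Rpower_plus.
Qed.

Lemma rpow_1 x : 0 <= x -> rpow x 1 = x.
Proof.
  intros Hx. destruct (Req_dec x 0) as [->|Hx0]. { apply rpow_0. }
  rewrite rpow_E by lra. apply Rpower_1. lra.
Qed.

Lemma rpow_rpow x p q : 0 <= x -> rpow (rpow x p) q = rpow x (p * q).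
Proof.
  intros Hx. destruct (Req_dec x 0) as [->|Hx0]. { rewrite !rpow_0. reflexivity. }
  assert (Hp : 0 < Rpower x p) by (unfold Rpower; apply exp_pos).
  rewrite (rpow_E x p) by lra. rewrite (rpow_E (Rpower x p) q Hp).
  rewrite (rpow_E x (p * q)) by lra. apply Rpower_mult.
Qed.

Lemma rpow_inv_r x p : 0 <= x -> 0 < p -> rpow (rpow x p) (/ p) = x.
Proof.
  intros. rewrite rpow_rpow by auto. rewrite Rinv_r by lra. apply rpow_1; auto.
Qed.

Lemma rpow_inv_l x p : 0 <= x -> 0 < p -> rpow (rpow x (/ p)) p = x.
Proof.
  intros. rewrite rpow_rpow by auto. rewrite Rinv_l by lra. apply rpow_1; auto.
Qed.

Lemma rpow_two_sum u v p : 0 <= p -> 0 <= u -> 0 <= v ->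
  rpow (u + v) p <= rpow 2 p * (rpow u p + rpow v p).
Proof.
  intros Hp Hu Hv.
  assert (rpow (u + v) p <= rpow (2 * Rmax u v) p).
  { apply rpow_le; auto. split; [lra|]. pose proof (Rmax_l u v). pose proof (Rmax_r u v). lra. }
  assert (0 <= Rmax u v) by (apply (Rle_trans _ u); [lra|apply Rmax_l]).
  rewrite rpow_mul in H by lra.
  pose proof (rpow_ge0 u p). pose proof (rpow_ge0 v p). pose proof (rpow_ge0 2 p).
  assert (rpow (Rmax u v) p <= rpow u p + rpow v p).
  { unfold Rmax. destruct (Rle_dec u v); lra. }
  nra.
Qed.

Lemma rpow_three_sum u v w p : 0 <= p -> 0 <= u -> 0 <= v -> 0 <= w ->
  rpow (u + v + w) p <= rpow 3 p * (rpow u p + rpow v p + rpow w p).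
Proof.
  intros Hp Hu Hv Hw.
  set (m := Rmax u (Rmax v w)).
  assert (Hm1 : u <= m) by apply Rmax_l.
  assert (Hm2 : v <= m) by (eapply Rle_trans; [apply (Rmax_l v w)|apply Rmax_r]).
  assert (Hm3 : w <= m) by (eapply Rle_trans; [apply (Rmax_r v w)|apply Rmax_r]).
  assert (rpow (u + v + w) p <= rpow (3 * m) p) by (apply rpow_le; lra).
  rewrite rpow_mul in H by lra.
  pose proof (rpow_ge0 u p). pose proof (rpow_ge0 v p). pose proof (rpow_ge0 w p).
  pose proof (rpow_ge0 3 p).
  assert (rpow m p <= rpow u p + rpow v p + rpow w p).
  { unfold m, Rmax. destruct (Rle_dec v w); destruct (Rle_dec u _); lra. }
  nra.
Qed.

Lemma rpow_superadd u v p : 1 <= p -> 0 <= u -> 0 <= v ->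
  rpow u p + rpow v p <= rpow (u + v) p.
Proof.
  intros Hp Hu Hv.
  destruct (Req_dec u 0) as [->|Hu0]. { rewrite rpow_0, !Rplus_0_l. lra. }
  destruct (Req_dec v 0) as [->|Hv0]. { rewrite rpow_0, !Rplus_0_r. lra. }
  destruct (Req_dec p 1) as [->|Hp1].
  { rewrite !rpow_1 by lra. lra. }
  replace p with (1 + (p - 1)) by ring.
  rewrite !rpow_add_exp by lra. rewrite !rpow_1 by lra.
  assert (rpow u (p - 1) <= rpow (u + v) (p - 1)) by (apply rpow_le; lra).
  assert (rpow v (p - 1) <= rpow (u + v) (p - 1)) by (apply rpow_le; lra).
  pose proof (Rmult_le_compat_l u _ _ Hu H). pose proof (Rmult_le_compat_l v _ _ Hv H0). lra.
Qed.

Lemma rpow_neg_exp_anti x y e : e <= 0 -> 0 < x <= y -> rpow y e <= rpow x e.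
Proof.
  intros He Hxy. rewrite !rpow_E by lra. unfold Rpower.
  destruct (Req_dec x y) as [->|Hne]; [lra|].
  assert (ln x < ln y) by (apply ln_increasing; lra).
  destruct (Req_dec e 0) as [->|He0]; [rewrite !Rmult_0_l; lra|].
  left. apply exp_increasing. nra.
Qed.

Lemma rpow_Ktrick G K s r : 0 <= G -> 0 < K -> 0 < s -> s <= r ->
  rpow G s <= rpow K s + rpow K (s - r) * rpow G r.
Proof.
  intros HG HK Hs Hsr.
  pose proof (rpow_ge0 K (s - r)). pose proof (rpow_ge0 G r). pose proof (rpow_ge0 K s).
  destruct (Rle_lt_dec G K).
  - assert (rpow G s <= rpow K s) by (apply rpow_le; lra). nra.
  - destruct (Req_dec s r) as [->|Hne].
    + replace (r - r) with 0 by ring. rewrite (rpow_E K 0) by lra. rewrite Rpower_O by lra. lra.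
    + replace (rpow G s) with (rpow G (s - r) * rpow G r).
      * assert (rpow G (s - r) <= rpow K (s - r)) by (apply rpow_neg_exp_anti; lra). nra.
      * rewrite !rpow_E by lra. rewrite <- Rpower_plus. f_equal. ring.
Qed.

Lemma rpow_le_1_plus G s r : 0 <= G -> 0 <= s -> s <= r -> rpow G s <= 1 + rpow G r.
Proof.
  intros HG Hs Hsr. pose proof (rpow_ge0 G r).
  destruct (Rle_lt_dec G 1).
  - assert (rpow G s <= rpow 1 s) by (apply rpow_le; lra).
    rewrite (rpow_E 1) in H0 by lra. unfold Rpower in H0. rewrite ln_1, Rmult_0_r, exp_0 in H0. lra.
  - rewrite !rpow_E by lra. assert (Rpower G s <= Rpower G r) by (apply Rle_Rpower; lra). lra.
Qed.

Lemma lub_unique E a b : is_lub E a -> is_lub E b -> a = b.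
Proof. intros [Ha1 Ha2] [Hb1 Hb2]. apply Rle_antisym; auto. Qed.

Lemma epsilon_lub E m : is_lub E m -> is_lub E (epsilon (inhabits 0) (fun y => is_lub E y)).
Proof. intros H. apply epsilon_spec. exists m; exact H. Qed.

Lemma qf_lub F t : is_cdf F -> 0 < t < 1 -> is_lub (fun x => F x <= t) (qf F t).
Proof.
  intros [Hm [Hr [H0 H1]]] Ht.
  destruct (H1 (1 - t) ltac:(lra)) as [M HM].
  destruct (H0 t ltac:(lra)) as [M' HM'].
  assert (Hb : bound (fun x => F x <= t)).
  { exists M. intros x Hx. destruct (Rle_lt_dec x M); [lra|].
    pose proof (HM x ltac:(lra)). lra. }
  assert (Hne : exists x, F x <= t).
  { exists (- M'). pose proof (HM' (- M') ltac:(lra)). lra. }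
  destruct (completeness _ Hb Hne) as [m Hmm].
  unfold qf. apply (epsilon_lub _ m Hmm).
Qed.

Lemma qf_mono F t1 t2 : is_cdf F -> 0 < t1 -> t1 <= t2 -> t2 < 1 -> qf F t1 <= qf F t2.
Proof.
  intros HF H1 H12 H2.
  destruct (qf_lub F t1 HF ltac:(lra)) as [_ Hl1].
  destruct (qf_lub F t2 HF ltac:(lra)) as [Hu2 _].
  apply Hl1. intros x Hx. apply Hu2. lra.
Qed.

Lemma cntle_ge0 x y m : 0 <= cntle x y m.
Proof. induction m; simpl; [lra|]. destruct (Rle_dec (x m) y); lra. Qed.

Lemma cntle_ge x y : forall m j, (j <= m)%nat -> (forall i, (i < j)%nat -> x i <= y) ->
  INR j <= cntle x y m.
Proof.
  induction m as [|m IH]; intros j Hjm Hi.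
  - replace j with 0%nat by lia. simpl; lra.
  - simpl. destruct (Nat.eq_dec j (S m)) as [->|Hne].
    + rewrite S_INR. assert (INR m <= cntle x y m) by (apply IH; auto; intros; apply Hi; lia).
      destruct (Rle_dec (x m) y); [lra|]. exfalso. apply n, Hi. lia.
    + assert (INR j <= cntle x y m) by (apply IH; auto; lia).
      destruct (Rle_dec (x m) y); lra.
Qed.

Lemma cntle_le_m x y m : cntle x y m <= INR m.
Proof.
  induction m; [simpl; lra|]. rewrite S_INR. cbn [cntle]. destruct (Rle_dec (x m) y); lra.
Qed.

Lemma cntle_le x y : forall m j, (j <= m)%nat -> (forall i, (j <= i < m)%nat -> y < x i) ->
  cntle x y m <= INR j.
Proof.
  induction m as [|m IH]; intros j Hjm Hi.
  - replace j with 0%nat by lia. simpl; lra.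
  - simpl. destruct (Nat.eq_dec j (S m)) as [->|Hne].
    + rewrite S_INR. pose proof (cntle_le_m x y m).
      destruct (Rle_dec (x m) y); lra.
    + assert (cntle x y m <= INR j) by (apply IH; [lia| intros; apply Hi; lia]).
      destruct (Rle_dec (x m) y); [|lra]. exfalso.
      pose proof (Hi m ltac:(lia)). lra.
Qed.

Lemma qf_emp n x k t : (1 <= n)%nat -> in_Xi n x -> (k < n)%nat ->
  INR k / INR n <= t < INR (S k) / INR n -> qf (emp_cdf n x) t = x k.
Proof.
  intros Hn Hx Hk Ht.
  assert (Hnp : 0 < INR n) by (apply lt_0_INR; lia).
  assert (Ht1 : INR k <= t * INR n).
  { destruct Ht as [Ht _]. apply Rmult_le_compat_r with (r := INR n) in Ht; [|lra].
    unfold Rdiv in Ht. rewrite Rmult_assoc, Rinv_l in Ht by lra. lra. }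
  assert (Ht2 : t * INR n < INR (S k)).
  { destruct Ht as [_ Ht]. apply Rmult_lt_compat_r with (r := INR n) in Ht; [|lra].
    unfold Rdiv in Ht. rewrite Rmult_assoc, Rinv_l in Ht by lra. lra. }
  assert (Hlub : is_lub (fun y => emp_cdf n x y <= t) (x k)).
  { split.
    - intros y Hy. destruct (Rle_lt_dec y (x k)) as [|Hlt]; [auto|]. exfalso.
      assert (INR (S k) <= cntle x y n).
      { apply cntle_ge; [lia|]. intros i Hi. pose proof (Hx i k ltac:(lia) Hk). lra. }
      unfold emp_cdf in Hy. apply Rmult_le_compat_r with (r := INR n) in Hy; [|lra].
      unfold Rdiv in Hy. rewrite Rmult_assoc, Rinv_l in Hy by lra. lra.
    - intros u Hu. destruct (Rle_lt_dec (x k) u) as [|Hlt]; [auto|]. exfalso.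
      set (y := (u + x k) / 2).
      assert (Hy : emp_cdf n x y <= t).
      { unfold emp_cdf. assert (cntle x y n <= INR k).
        { apply cntle_le; [lia|]. intros i Hi. pose proof (Hx k i ltac:(lia) ltac:(lia)).
          unfold y; lra. }
        apply Rmult_le_reg_r with (INR n); [lra|]. unfold Rdiv.
        rewrite Rmult_assoc, Rinv_l by lra. lra. }
      pose proof (Hu y Hy). unfold y in H; lra. }
  unfold qf. apply (lub_unique _ _ _ (epsilon_lub _ _ Hlub) Hlub).
Qed.

Lemma floor_nat : forall m u, 0 <= u < INR m -> exists k, (k < m)%nat /\ INR k <= u < INR k + 1.
Proof.
  induction m as [|m IH]; intros u Hu.
  - simpl in Hu. lra.
  - rewrite S_INR in Hu. destruct (Rlt_le_dec u (INR m)).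
    + destruct (IH u ltac:(lra)) as [k [Hk1 Hk2]]. exists k. split; [lia|auto].
    + exists m. split; [lia|lra].
Qed.

Lemma piece_exists n t : (1 <= n)%nat -> 0 <= t < 1 ->
  exists k, (k < n)%nat /\ INR k / INR n <= t < INR (S k) / INR n.
Proof.
  intros Hn Ht. assert (Hnp : 0 < INR n) by (apply lt_0_INR; lia).
  destruct (floor_nat n (t * INR n)) as [k [Hk1 Hk2]].
  { split; [nra|]. nra. }
  exists k. split; auto. rewrite S_INR. split.
  - apply Rmult_le_reg_r with (INR n); [lra|]. unfold Rdiv. rewrite Rmult_assoc, Rinv_l by lra. lra.
  - apply Rmult_lt_reg_r with (INR n); [lra|]. unfold Rdiv. rewrite Rmult_assoc, Rinv_l by lra. lra.
Qed.

Definition Mono (phi : R -> R) := forall u v, 0 < u -> u <= v -> v < 1 -> phi u <= phi v.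

Lemma ex_RInt_powdiff phi c p a b : Mono phi -> 0 <= p -> 0 < a -> a <= b -> b < 1 ->
  ex_RInt (fun t => rpow (Rabs (c - phi t)) p) a b.
Proof.
  intros Hm Hp Ha Hab Hb.
  assert (HA : ex_RInt (fun t => rpow (Rabs (c - Rmin (phi t) c)) p) a b).
  { apply antimono_ex_RInt; auto. intros u v h1 h2 h3.
    pose proof (Hm u v ltac:(lra) h2 ltac:(lra)).
    apply rpow_le; auto. split; [apply Rabs_pos|].
    unfold Rmin. destruct (Rle_dec (phi u) c); destruct (Rle_dec (phi v) c);
      rewrite ?Rabs_right; lra. }
  assert (HB : ex_RInt (fun t => rpow (Rabs (c - Rmax (phi t) c)) p) a b).
  { apply mono_ex_RInt; auto. intros u v h1 h2 h3.
    pose proof (Hm u v ltac:(lra) h2 ltac:(lra)).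
    apply rpow_le; auto. split; [apply Rabs_pos|].
    unfold Rmax. destruct (Rle_dec (phi u) c); destruct (Rle_dec (phi v) c);
      rewrite ?Rabs_left1, ?Rabs_right; lra. }
  pose proof (ex_RInt_plus _ _ _ _ HA HB) as H.
  eapply ex_RInt_ext; [|exact H]. intros x _. simpl. unfold plus; simpl.
  unfold Rmin, Rmax. destruct (Rle_dec (phi x) c).
  - replace (c - c) with 0 by ring. rewrite Rabs_R0, rpow_0. ring.
  - replace (c - c) with 0 by ring. rewrite Rabs_R0, rpow_0. ring.
Qed.

Lemma ex_RInt_pow phi p a b : Mono phi -> 0 <= p -> 0 < a -> a <= b -> b < 1 ->
  ex_RInt (fun t => rpow (Rabs (phi t)) p) a b.
Proof.
  intros. eapply ex_RInt_ext; [|apply (ex_RInt_powdiff phi 0 p a b); auto].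
  intros x _. simpl. rewrite Rminus_0_l, Rabs_Ropp. reflexivity.
Qed.

Definition rho (phi : R -> R) (M r : R) (t : R) :=
  if Rlt_dec M (phi t) then rpow (Rabs (phi t)) r else 0.
Definition sig (phi : R -> R) (M r : R) (t : R) :=
  if Rlt_dec (phi t) (- M) then rpow (Rabs (phi t)) r else 0.

Lemma ex_RInt_rho phi M r a b : Mono phi -> 0 <= M -> 0 <= r -> 0 < a -> a <= b -> b < 1 ->
  ex_RInt (rho phi M r) a b.
Proof.
  intros Hm HM Hr Ha Hab Hb. apply mono_ex_RInt; auto. intros u v h1 h2 h3.
  pose proof (Hm u v ltac:(lra) h2 ltac:(lra)). unfold rho.
  destruct (Rlt_dec M (phi u)); destruct (Rlt_dec M (phi v)).
  - apply rpow_le; auto. rewrite !Rabs_right by lra. lra.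
  - lra.
  - apply rpow_ge0.
  - lra.
Qed.

Lemma ex_RInt_sig phi M r a b : Mono phi -> 0 <= M -> 0 <= r -> 0 < a -> a <= b -> b < 1 ->
  ex_RInt (sig phi M r) a b.
Proof.
  intros Hm HM Hr Ha Hab Hb. apply antimono_ex_RInt; auto. intros u v h1 h2 h3.
  pose proof (Hm u v ltac:(lra) h2 ltac:(lra)). unfold sig.
  destruct (Rlt_dec (phi u) (-M)); destruct (Rlt_dec (phi v) (-M)).
  - apply rpow_le; auto. rewrite !Rabs_left by lra. lra.
  - apply rpow_ge0.
  - lra.
  - lra.
Qed.

Lemma RInt_const_R a b c : RInt (fun _ => c) a b = (b - a) * c.
Proof. rewrite RInt_const. reflexivity. Qed.

Lemma RInt_le_const f a b c : a <= b -> ex_RInt f a b ->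
  (forall t, a < t < b -> f t <= c) -> RInt f a b <= (b - a) * c.
Proof.
  intros. rewrite <- RInt_const_R. apply RInt_le; auto. apply ex_RInt_const.
Qed.

Lemma RInt_ge_const f a b c : a <= b -> ex_RInt f a b ->
  (forall t, a < t < b -> c <= f t) -> (b - a) * c <= RInt f a b.
Proof.
  intros. rewrite <- RInt_const_R. apply RInt_le; auto. apply ex_RInt_const.
Qed.

Lemma RInt_nonneg f a b : a <= b -> ex_RInt f a b -> (forall t, a < t < b -> 0 <= f t) ->
  0 <= RInt f a b.
Proof. intros. apply RInt_ge_0; auto. Qed.

Lemma RInt_Chasles_R f a b c : ex_RInt f a b -> ex_RInt f b c ->
  RInt f a b + RInt f b c = RInt f a c.
Proof. intros. rewrite <- (RInt_Chasles f a b c) by auto. reflexivity. Qed.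

Lemma ex_RInt_sub f a b c d : a <= c -> c <= d -> d <= b -> ex_RInt f a b -> ex_RInt f c d.
Proof.
  intros. apply (@ex_RInt_Chasles_1 R_CompleteNormedModule f c d b); [lra|].
  apply (@ex_RInt_Chasles_2 R_CompleteNormedModule f a c b); [lra|auto].
Qed.

Lemma RInt_mono_int f a c d b : a <= c -> c <= d -> d <= b -> ex_RInt f a b ->
  (forall t, a < t < b -> 0 <= f t) -> RInt f c d <= RInt f a b.
Proof.
  intros H1 H2 H3 Hf Hp.
  assert (E1 : ex_RInt f a c) by (apply (ex_RInt_sub f a b); auto; lra).
  assert (E2 : ex_RInt f c d) by (apply (ex_RInt_sub f a b); auto; lra).
  assert (E3 : ex_RInt f d b) by (apply (ex_RInt_sub f a b); auto; lra).
  assert (E4 : ex_RInt f c b) by (apply (ex_RInt_sub f a b); auto; lra).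
  rewrite <- (RInt_Chasles_R f a c b) by auto.
  rewrite <- (RInt_Chasles_R f c d b) by auto.
  assert (0 <= RInt f a c) by (apply RInt_nonneg; auto; intros; apply Hp; lra).
  assert (0 <= RInt f d b) by (apply RInt_nonneg; auto; intros; apply Hp; lra).
  lra.
Qed.

Lemma RInt_plus_R f (g : R -> R) a b : ex_RInt f a b -> ex_RInt g a b ->
  RInt (fun t => f t + g t) a b = RInt f a b + RInt g a b.
Proof. intros. rewrite <- (RInt_plus f g) by auto. reflexivity. Qed.

Lemma RInt_scal_R f a b l : ex_RInt f a b -> RInt (fun t => l * f t) a b = l * RInt f a b.
Proof. intros. rewrite <- (RInt_scal f) by auto. reflexivity. Qed.

Lemma ex_RInt_plus_R f (g : R -> R) a b : ex_RInt f a b -> ex_RInt g a b -> ex_RInt (fun t => f t + g t) a b.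
Proof. intros. apply (ex_RInt_plus f g); auto. Qed.

Lemma ex_RInt_scal_R f a b l : ex_RInt f a b -> ex_RInt (fun t => l * f t) a b.
Proof. intros. apply (ex_RInt_scal f a b l); auto. Qed.

Fixpoint sumk (g : nat -> R) (m : nat) : R :=
  match m with O => 0 | S m' => sumk g m' + g m' end.

Lemma sumk_le g g' m : (forall k, (k < m)%nat -> g k <= g' k) -> sumk g m <= sumk g' m.
Proof.
  induction m; intros H; simpl; [lra|]. pose proof (H m ltac:(lia)).
  assert (sumk g m <= sumk g' m) by (apply IHm; intros; apply H; lia). lra.
Qed.

Lemma sumk_plus g g' m : sumk (fun k => g k + g' k) m = sumk g m + sumk g' m.
Proof. induction m; simpl; [ring|]. rewrite IHm. ring. Qed.

Lemma sumk_scal g l m : sumk (fun k => l * g k) m = l * sumk g m.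
Proof. induction m; simpl; [ring|]. rewrite IHm. ring. Qed.

Lemma sumk_tele u m : sumk (fun k => u (S k) - u k) m = u m - u O.
Proof. induction m; simpl; [ring|]. rewrite IHm. ring. Qed.

Lemma sumk_first g m : sumk g (S m) = g O + sumk (fun k => g (S k)) m.
Proof. induction m; simpl in *; [ring|]. rewrite IHm. ring. Qed.

Lemma sumk_nonneg g m : (forall k, (k < m)%nat -> 0 <= g k) -> 0 <= sumk g m.
Proof.
  induction m; intros H; simpl; [lra|]. pose proof (H m ltac:(lia)).
  assert (0 <= sumk g m) by (apply IHm; intros; apply H; lia). lra.
Qed.

Lemma sumk_ext g g' m : (forall k, (k < m)%nat -> g k = g' k) -> sumk g m = sumk g' m.
Proof.
  induction m; intros H; simpl; [lra|]. rewrite (H m ltac:(lia)).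
  rewrite IHm; [reflexivity|]. intros; apply H; lia.
Qed.

Lemma sumk_split3 g n : (2 <= n)%nat ->
  sumk g n = g O + sumk (fun k => g (S k)) (n - 2) + g (n - 1)%nat.
Proof.
  intros Hn. replace n with (S (S (n - 2))) at 1 by lia.
  rewrite sumk_first. simpl. replace (S (n - 2)) with (n - 1)%nat by lia. ring.
Qed.

Lemma sumk_RInt f u m : (forall k, (k < m)%nat -> ex_RInt f (u k) (u (S k))) ->
  ex_RInt f (u O) (u m) /\ sumk (fun k => RInt f (u k) (u (S k))) m = RInt f (u O) (u m).
Proof.
  induction m; intros H.
  - simpl. split; [apply ex_RInt_point|]. rewrite RInt_point. reflexivity.
  - destruct IHm as [E1 E2]; [intros; apply H; lia|].
    pose proof (H m ltac:(lia)) as E3.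
    split; [apply (ex_RInt_Chasles _ _ _ _ E1 E3)|].
    simpl. rewrite E2. apply RInt_Chasles_R; auto.
Qed.

Definition cpt (a b : R) (n k : nat) := Rmax a (Rmin b (INR k / INR n)).

Lemma cpt_0 a b n : 0 < a -> a <= b -> cpt a b n 0 = a.
Proof.
  intros. unfold cpt. simpl. unfold Rdiv. rewrite Rmult_0_l.
  rewrite Rmin_right by lra. apply Rmax_left; lra.
Qed.

Lemma cpt_n a b n : (1 <= n)%nat -> a <= b -> b < 1 -> cpt a b n n = b.
Proof.
  intros. unfold cpt. assert (0 < INR n) by (apply lt_0_INR; lia).
  unfold Rdiv. rewrite Rinv_r by lra. rewrite Rmin_left by lra. apply Rmax_right; lra.
Qed.

Lemma cpt_bounds a b n k : a <= b -> a <= cpt a b n k <= b.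
Proof.
  intros. unfold cpt. split; [apply Rmax_l|].
  apply Rmax_lub; [lra|apply Rmin_l].
Qed.

Lemma INR_div_le n i j : (1 <= n)%nat -> (i <= j)%nat -> INR i / INR n <= INR j / INR n.
Proof.
  intros. assert (0 < INR n) by (apply lt_0_INR; lia).
  apply Rmult_le_compat_r; [left; apply Rinv_0_lt_compat; lra|]. apply le_INR; auto.
Qed.

Lemma cpt_mono a b n k : (1 <= n)%nat -> a <= b -> cpt a b n k <= cpt a b n (S k).
Proof.
  intros. unfold cpt. pose proof (INR_div_le n k (S k) H ltac:(lia)).
  apply Rmax_le_compat; [lra|]. unfold Rmin.
  destruct (Rle_dec b (INR k / INR n)); destruct (Rle_dec b (INR (S k) / INR n)); lra.
Qed.

Lemma cpt_in a b n k t : (1 <= n)%nat -> a <= b ->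
  cpt a b n k < t < cpt a b n (S k) -> INR k / INR n < t < INR (S k) / INR n.
Proof.
  intros Hn Hab Ht. unfold cpt in Ht.
  set (u := INR k / INR n) in *. set (v := INR (S k) / INR n) in *.
  pose proof (Rmax_l a (Rmin b u)). pose proof (Rmax_r a (Rmin b u)).
  assert (F2 : Rmax a (Rmin b v) <= b) by (apply Rmax_lub; [lra|apply Rmin_l]).
  assert (F3 : Rmax a (Rmin b v) = a \/ Rmax a (Rmin b v) = Rmin b v).
  { unfold Rmax. destruct (Rle_dec a (Rmin b v)); auto. }
  assert (F4 : Rmin b u = b \/ Rmin b u = u).
  { unfold Rmin. destruct (Rle_dec b u); auto. }
  pose proof (Rmin_r b v).
  split.
  - destruct F4 as [F4|F4]; rewrite F4 in *; lra.
  - destruct F3 as [F3|F3]; rewrite F3 in *; lra.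
Qed.

Lemma RInt_point_R f a : RInt f a a = 0.
Proof. exact (RInt_point a f). Qed.

Lemma piece_decomp n f (g : nat -> R -> R) a b : (1 <= n)%nat -> 0 < a -> a <= b -> b < 1 ->
  (forall k t, (k < n)%nat -> INR k / INR n < t < INR (S k) / INR n -> f t = g k t) ->
  (forall k u v, (k < n)%nat -> 0 < u -> u <= v -> v < 1 -> ex_RInt (g k) u v) ->
  ex_RInt f a b /\
  RInt f a b = sumk (fun k => RInt (g k) (cpt a b n k) (cpt a b n (S k))) n.
Proof.
  intros Hn Ha Hab Hb Hfg Hg.
  assert (Hp : forall k, (k < n)%nat ->
    ex_RInt f (cpt a b n k) (cpt a b n (S k)) /\
    RInt f (cpt a b n k) (cpt a b n (S k)) = RInt (g k) (cpt a b n k) (cpt a b n (S k))).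
  { intros k Hk. pose proof (cpt_mono a b n k Hn Hab).
    pose proof (cpt_bounds a b n k Hab). pose proof (cpt_bounds a b n (S k) Hab).
    assert (Hext : forall x, Rmin (cpt a b n k) (cpt a b n (S k)) < x <
                             Rmax (cpt a b n k) (cpt a b n (S k)) -> g k x = f x).
    { intros x Hx. rewrite Rmin_left, Rmax_right in Hx by lra.
      symmetry. apply Hfg; auto. apply (cpt_in a b n k x Hn Hab Hx). }
    split.
    - eapply ex_RInt_ext; [exact Hext|]. apply Hg; auto; lra.
    - symmetry. apply RInt_ext. exact Hext. }
  destruct (sumk_RInt f (cpt a b n) n) as [E1 E2].
  { intros k Hk. apply Hp; auto. }
  rewrite cpt_0, cpt_n in E1, E2 by auto.
  split; auto. rewrite <- E2. apply sumk_ext. intros k Hk. apply Hp; auto.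
Qed.

Lemma int01_ge f I a b : int01 f I -> 0 < a -> a < b -> b < 1 -> ex_RInt f a b ->
  RInt f a b <= I.
Proof.
  intros [Hu _] Ha Hab Hb Hf. apply Hu. pose proof (ex_RInt_Reals_0 _ _ _ Hf) as pr.
  exists a, b, pr. repeat split; auto. apply RInt_Reals.
Qed.

Lemma int01_le f I U : int01 f I ->
  (forall a b, 0 < a -> a < b -> b < 1 -> ex_RInt f a b -> RInt f a b <= U) -> I <= U.
Proof.
  intros [_ Hl] H. apply Hl. intros v [a [b [pr [Ha [Hab [Hb ->]]]]]].
  rewrite <- RInt_Reals. apply H; auto. apply ex_RInt_Reals_1; auto.
Qed.

Lemma int01_approx f I e : int01 f I -> 0 < e ->
  exists a b, 0 < a /\ a < b /\ b < 1 /\ ex_RInt f a b /\ I - e < RInt f a b.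
Proof.
  intros HI He. apply NNPP. intros Hn.
  assert (I <= I - e); [|lra].
  destruct HI as [_ Hl]. apply Hl. intros v [a [b [pr [Ha [Hab [Hb ->]]]]]].
  destruct (Rle_lt_dec (RiemannInt pr) (I - e)); auto. exfalso. apply Hn.
  exists a, b. repeat split; auto. apply ex_RInt_Reals_1; auto. rewrite RInt_Reals with (pr := pr). auto.
Qed.

Lemma int01_exists f U :
  (forall a b, 0 < a -> a <= b -> b < 1 -> ex_RInt f a b) ->
  (forall a b, 0 < a -> a <= b -> b < 1 -> RInt f a b <= U) ->
  exists I, int01 f I /\ I <= U.
Proof.
  intros Hex Hb.
  assert (Hbd : bound (fun v => exists a b (pr : Riemann_integrable f a b),
                     0 < a /\ a < b /\ b < 1 /\ v = RiemannInt pr)).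
  { exists U. intros v [a [b [pr [Ha [Hab [Hb' ->]]]]]]. rewrite <- RInt_Reals. apply Hb; lra. }
  assert (Hne : exists v, exists a b (pr : Riemann_integrable f a b),
                     0 < a /\ a < b /\ b < 1 /\ v = RiemannInt pr).
  { pose proof (ex_RInt_Reals_0 _ _ _ (Hex (1/4) (1/2) ltac:(lra) ltac:(lra) ltac:(lra))) as pr.
    exists (RiemannInt pr), (1/4), (1/2), pr. repeat split; lra. }
  destruct (completeness _ Hbd Hne) as [I HI].
  exists I. split; [exact HI|]. apply (int01_le f I U HI). intros; apply Hb; lra.
Qed.

Lemma int01_nonneg f I : int01 f I ->
  (forall a b, 0 < a -> a <= b -> b < 1 -> ex_RInt f a b) ->
  (forall t, 0 < t < 1 -> 0 <= f t) -> 0 <= I.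
Proof.
  intros HI Hex Hp. eapply Rle_trans; [|apply (int01_ge f I (1/4) (1/2)); auto; try lra].
  - apply RInt_nonneg; [lra| |intros; apply Hp; lra]. apply Hex; lra.
  - apply Hex; lra.
Qed.

Definition Good (r : R) (phi : R -> R) (I : R) : Prop :=
  Mono phi /\
  (forall a b, 0 < a -> a <= b -> b < 1 -> RInt (fun t => rpow (Rabs (phi t)) r) a b <= I) /\
  (forall e, 0 < e -> exists a0 b0, 0 < a0 /\ a0 <= b0 /\ b0 < 1 /\
      I - e <= RInt (fun t => rpow (Rabs (phi t)) r) a0 b0).

Lemma qf_Mono F : is_cdf F -> Mono (qf F).
Proof. intros HF u v Hu Huv Hv. apply qf_mono; auto. Qed.

Lemma good_q F r : 0 <= r -> is_cdf F -> in_Pr r F -> exists I, Good r (qf F) I.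
Proof.
  intros Hr HF [I HI]. exists I.
  pose proof (qf_Mono F HF) as Hm.
  assert (Hex : forall a b, 0 < a -> a <= b -> b < 1 ->
             ex_RInt (fun t => rpow (Rabs (qf F t)) r) a b).
  { intros. apply ex_RInt_pow; auto. }
  assert (HI0 : 0 <= I).
  { apply (int01_nonneg _ I HI Hex). intros; apply rpow_ge0. }
  split; [exact Hm|]. split.
  - intros a b Ha Hab Hb. destruct (Req_dec a b) as [<-|Hne].
    + rewrite RInt_point. exact HI0.
    + apply int01_ge; auto; lra.
  - intros e He. destruct (int01_approx _ I e HI He) as [a [b [Ha [Hab [Hb [_ H]]]]]].
    exists a, b. repeat split; auto; lra.
Qed.

Definition fvec (F : R -> R) (n : nat) (x : nat -> R) (p : R) (t : R) : R :=
  rpow (Rabs (qf (emp_cdf n x) t - qf F t)) p.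

Definition gk (F : R -> R) (x : nat -> R) (p : R) (k : nat) (t : R) : R :=
  rpow (Rabs (x k - qf F t)) p.

Lemma fvec_decomp F n x p a b : is_cdf F -> 0 <= p -> (1 <= n)%nat -> in_Xi n x ->
  0 < a -> a <= b -> b < 1 ->
  ex_RInt (fvec F n x p) a b /\
  RInt (fvec F n x p) a b =
    sumk (fun k => RInt (gk F x p k) (cpt a b n k) (cpt a b n (S k))) n.
Proof.
  intros HF Hp Hn Hx Ha Hab Hb. apply piece_decomp; auto.
  - intros k t Hk Ht. unfold fvec, gk. rewrite (qf_emp n x k t); auto. lra.
  - intros k u v Hk Hu Huv Hv. unfold gk. apply ex_RInt_powdiff; auto. apply qf_Mono; auto.
Qed.

Lemma fvec_ex F n x p a b : is_cdf F -> 0 <= p -> (1 <= n)%nat -> in_Xi n x ->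
  0 < a -> a <= b -> b < 1 -> ex_RInt (fvec F n x p) a b.
Proof. intros. apply fvec_decomp; auto. Qed.

Lemma fvec_nonneg F n x p t : 0 <= fvec F n x p t.
Proof. apply rpow_ge0. Qed.

Lemma sumk_term_le g m k : (forall i, (i < m)%nat -> 0 <= g i) -> (k < m)%nat -> g k <= sumk g m.
Proof.
  induction m; intros H Hk; [lia|]. simpl.
  assert (0 <= sumk g m) by (apply sumk_nonneg; intros; apply H; lia).
  destruct (Nat.eq_dec k m) as [->|Hne]; [lra|].
  assert (g k <= sumk g m) by (apply IHm; [intros; apply H; lia|lia]).
  pose proof (H m ltac:(lia)). lra.
Qed.

Lemma fvec_bound F r p n y I : is_cdf F -> 1 <= p -> p <= r -> Good r (qf F) I ->
  (1 <= n)%nat -> in_Xi n y ->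
  exists U, forall a b, 0 < a -> a <= b -> b < 1 -> RInt (fvec F n y p) a b <= U.
Proof.
  intros HF Hp Hpr [Hm [HI _]] Hn Hy.
  set (Y := sumk (fun k => Rabs (y k)) n).
  set (C := rpow 2 p * (rpow Y p + 1)).
  assert (HY : 0 <= Y) by (apply sumk_nonneg; intros; apply Rabs_pos).
  assert (HC : 0 <= C).
  { unfold C. pose proof (rpow_ge0 2 p). pose proof (rpow_ge0 Y p). nra. }
  assert (HI0 : 0 <= I).
  { eapply Rle_trans; [|apply (HI (1/2) (1/2)); lra]. rewrite RInt_point_R. lra. }
  exists (C + rpow 2 p * I). intros a b Ha Hab Hb.
  assert (Hq : ex_RInt (fun t => rpow (Rabs (qf F t)) r) a b) by (apply ex_RInt_pow; auto; lra).
  eapply Rle_trans.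
  - apply RInt_le with (g := fun t => C + rpow 2 p * rpow (Rabs (qf F t)) r); auto.
    + apply fvec_ex; auto; lra.
    + apply ex_RInt_plus_R; [apply ex_RInt_const|]. apply ex_RInt_scal_R; auto.
    + intros t Ht. destruct (piece_exists n t Hn ltac:(lra)) as [k [Hk Hkt]].
      unfold fvec. rewrite (qf_emp n y k t); auto.
      assert (Hyk : Rabs (y k) <= Y).
      { apply (sumk_term_le (fun k => Rabs (y k))); auto. intros; apply Rabs_pos. }
      assert (H1 : rpow (Rabs (y k - qf F t)) p <= rpow (Y + Rabs (qf F t)) p).
      { apply rpow_le; [lra|]. split; [apply Rabs_pos|].
        pose proof (Rabs_triang (y k) (- qf F t)). rewrite Rabs_Ropp in H. unfold Rminus. lra. }
      pose proof (rpow_two_sum Y (Rabs (qf F t)) p ltac:(lra) HY (Rabs_pos _)).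
      pose proof (rpow_le_1_plus (Rabs (qf F t)) p r (Rabs_pos _) ltac:(lra) Hpr).
      pose proof (rpow_ge0 2 p). unfold C. nra.
  - rewrite RInt_plus_R; [|apply ex_RInt_const|apply ex_RInt_scal_R; auto].
    rewrite RInt_const_R, RInt_scal_R by auto.
    pose proof (HI a b Ha Hab Hb). pose proof (rpow_ge0 2 p).
    assert (0 <= (1 - (b - a)) * C) by (apply Rmult_le_pos; lra).
    assert (rpow 2 p * RInt (fun t => rpow (Rabs (qf F t)) r) a b <= rpow 2 p * I)
      by (apply Rmult_le_compat_l; lra).
    lra.
Qed.

Lemma dist_exists F r p n y I : is_cdf F -> 1 <= p -> p <= r -> Good r (qf F) I ->
  (1 <= n)%nat -> in_Xi n y -> exists Ip, int01 (fvec F n y p) Ip.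
Proof.
  intros. destruct (fvec_bound F r p n y I) as [U HU]; auto.
  destruct (int01_exists (fvec F n y p) U) as [Ip [HIp _]]; eauto.
  intros. apply fvec_ex; auto; lra.
Qed.

Lemma split3_le f a b c d : a <= b -> b <= c -> c <= d -> ex_RInt f a d ->
  (forall t, a < t < d -> 0 <= f t) -> RInt f a b + RInt f c d <= RInt f a d.
Proof.
  intros H1 H2 H3 Hf Hp.
  assert (E1 : ex_RInt f a b) by (apply (ex_RInt_sub f a d); auto; lra).
  assert (E2 : ex_RInt f b c) by (apply (ex_RInt_sub f a d); auto; lra).
  assert (E3 : ex_RInt f c d) by (apply (ex_RInt_sub f a d); auto; lra).
  assert (E4 : ex_RInt f b d) by (apply (ex_RInt_sub f a d); auto; lra).
  rewrite <- (RInt_Chasles_R f a b d) by auto.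
  rewrite <- (RInt_Chasles_R f b c d) by auto.
  assert (0 <= RInt f b c) by (apply RInt_nonneg; auto; intros; apply Hp; lra).
  lra.
Qed.

Lemma tailL r phi I : 0 <= r -> Good r phi I -> forall e, 0 < e -> exists d, 0 < d <= 1/4 /\
  forall a c, 0 < a -> a <= c -> c <= d -> RInt (fun t => rpow (Rabs (phi t)) r) a c <= e.
Proof.
  intros Hr [Hm [HI Ha]] e He. destruct (Ha e He) as [a0 [b0 [H1 [H2 [H3 H4]]]]].
  exists (Rmin a0 (1/4)). split.
  { split; [apply Rmin_glb_lt; lra|apply Rmin_r]. }
  intros a c Ha' Hac Hcd. pose proof (Rmin_l a0 (1/4)).
  pose proof (split3_le (fun t => rpow (Rabs (phi t)) r) a c a0 b0 Hac ltac:(lra) H2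
    ltac:(apply ex_RInt_pow; auto; lra) ltac:(intros; apply rpow_ge0)).
  pose proof (HI a b0 Ha' ltac:(lra) H3). lra.
Qed.

Lemma tailR r phi I : 0 <= r -> Good r phi I -> forall e, 0 < e -> exists d, 0 < d <= 1/4 /\
  forall c b, 1 - d <= c -> c <= b -> b < 1 -> RInt (fun t => rpow (Rabs (phi t)) r) c b <= e.
Proof.
  intros Hr [Hm [HI Ha]] e He. destruct (Ha e He) as [a0 [b0 [H1 [H2 [H3 H4]]]]].
  exists (Rmin (1 - b0) (1/4)). split.
  { split; [apply Rmin_glb_lt; lra|apply Rmin_r]. }
  intros c b Hc Hcb Hb. pose proof (Rmin_l (1 - b0) (1/4)).
  pose proof (split3_le (fun t => rpow (Rabs (phi t)) r) a0 b0 c b H2 ltac:(lra) Hcb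
    ltac:(apply ex_RInt_pow; auto; lra) ltac:(intros; apply rpow_ge0)).
  pose proof (HI a0 b H1 ltac:(lra) Hb). lra.
Qed.

Lemma abs_between x y z : x <= y -> y <= z -> Rabs y <= Rmax (Rabs x) (Rabs z).
Proof.
  intros. unfold Rmax. destruct (Rle_dec (Rabs x) (Rabs z));
  unfold Rabs in *; destruct (Rcase_abs y); destruct (Rcase_abs x); destruct (Rcase_abs z); lra.
Qed.

Lemma rpow_between x y z r : 0 <= r -> x <= y -> y <= z ->
  rpow (Rabs y) r <= rpow (Rabs x) r + rpow (Rabs z) r.
Proof.
  intros. pose proof (abs_between x y z H0 H1).
  pose proof (rpow_ge0 (Rabs x) r). pose proof (rpow_ge0 (Rabs z) r).
  unfold Rmax in H2. destruct (Rle_dec (Rabs x) (Rabs z)).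
  - assert (rpow (Rabs y) r <= rpow (Rabs z) r) by (apply rpow_le; auto; split; [apply Rabs_pos|lra]). lra.
  - assert (rpow (Rabs y) r <= rpow (Rabs x) r) by (apply rpow_le; auto; split; [apply Rabs_pos|lra]). lra.
Qed.

Lemma V2L r phi I : 0 <= r -> Good r phi I -> forall e, 0 < e -> exists h0, 0 < h0 <= 1/4 /\
  forall h, 0 < h <= h0 -> h * rpow (Rabs (phi h)) r <= e.
Proof.
  intros Hr HG e He. destruct (tailL r phi I Hr HG (e / 4) ltac:(lra)) as [d [Hd Hint]].
  destruct HG as [Hm _].
  set (K := rpow (Rabs (phi (1/2))) r).
  assert (HK : 0 <= K) by apply rpow_ge0.
  exists (Rmin d (e / (2 * (K + 1)))). split.
  { split; [apply Rmin_glb_lt; [lra|apply Rdiv_lt_0_compat; lra]|].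
    pose proof (Rmin_l d (e / (2 * (K + 1)))). lra. }
  intros h Hh. pose proof (Rmin_l d (e / (2 * (K + 1)))).
  pose proof (Rmin_r d (e / (2 * (K + 1)))).
  assert (Hex : ex_RInt (fun t => rpow (Rabs (phi t)) r) (h/2) h) by (apply ex_RInt_pow; auto; lra).
  assert (H1 : (h - h/2) * rpow (Rabs (phi h)) r <=
               RInt (fun t => rpow (Rabs (phi t)) r + K) (h/2) h).
  { apply RInt_ge_const; [lra| |].
    - apply ex_RInt_plus_R; auto. apply ex_RInt_const.
    - intros t Ht. unfold K. apply rpow_between; auto; apply Hm; lra. }
  rewrite RInt_plus_R in H1 by (auto; apply ex_RInt_const).
  rewrite RInt_const_R in H1.
  pose proof (Hint (h/2) h ltac:(lra) ltac:(lra) ltac:(lra)).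
  assert (h * K <= e / 2).
  { assert (h * (K + 1) <= e / 2).
    { apply Rle_trans with (e / (2 * (K + 1)) * (K + 1)).
      - apply Rmult_le_compat_r; lra.
      - right. field. lra. }
    lra. }
  lra.
Qed.

Lemma V2R r phi I : 0 <= r -> Good r phi I -> forall e, 0 < e -> exists h0, 0 < h0 <= 1/4 /\
  forall h, 0 < h <= h0 -> h * rpow (Rabs (phi (1 - h))) r <= e.
Proof.
  intros Hr HG e He. destruct (tailR r phi I Hr HG (e / 4) ltac:(lra)) as [d [Hd Hint]].
  destruct HG as [Hm _].
  set (K := rpow (Rabs (phi (1/2))) r).
  assert (HK : 0 <= K) by apply rpow_ge0.
  exists (Rmin d (e / (2 * (K + 1)))). split.
  { split; [apply Rmin_glb_lt; [lra|apply Rdiv_lt_0_compat; lra]|].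
    pose proof (Rmin_l d (e / (2 * (K + 1)))). lra. }
  intros h Hh. pose proof (Rmin_l d (e / (2 * (K + 1)))).
  pose proof (Rmin_r d (e / (2 * (K + 1)))).
  assert (Hex : ex_RInt (fun t => rpow (Rabs (phi t)) r) (1 - h) (1 - h/2)) by (apply ex_RInt_pow; auto; lra).
  assert (H1 : ((1 - h/2) - (1 - h)) * rpow (Rabs (phi (1 - h))) r <=
               RInt (fun t => rpow (Rabs (phi t)) r + K) (1 - h) (1 - h/2)).
  { apply RInt_ge_const; [lra| |].
    - apply ex_RInt_plus_R; auto. apply ex_RInt_const.
    - intros t Ht. unfold K. rewrite Rplus_comm. apply rpow_between; auto; apply Hm; lra. }
  rewrite RInt_plus_R in H1 by (auto; apply ex_RInt_const).
  rewrite RInt_const_R in H1.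
  pose proof (Hint (1 - h) (1 - h/2) ltac:(lra) ltac:(lra) ltac:(lra)).
  assert (h * K <= e / 2).
  { assert (h * (K + 1) <= e / 2).
    { apply Rle_trans with (e / (2 * (K + 1)) * (K + 1)).
      - apply Rmult_le_compat_r; lra.
      - right. field. lra. }
    lra. }
  lra.
Qed.

Lemma end_simple phi c r u v : Mono phi -> 0 <= r -> 0 < u -> u <= v -> v < 1 ->
  RInt (fun t => rpow (Rabs (c - phi t)) r) u v <=
  rpow 2 r * ((v - u) * rpow (Rabs c) r + RInt (fun t => rpow (Rabs (phi t)) r) u v).
Proof.
  intros Hm Hr Hu Huv Hv.
  assert (Hq : ex_RInt (fun t => rpow (Rabs (phi t)) r) u v) by (apply ex_RInt_pow; auto).
  eapply Rle_trans.
  - apply RInt_le with (g := fun t => rpow 2 r * rpow (Rabs c) r + rpow 2 r * rpow (Rabs (phi t)) r); auto.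
    + apply ex_RInt_powdiff; auto.
    + apply ex_RInt_plus_R; [apply ex_RInt_const|apply ex_RInt_scal_R; auto].
    + intros t Ht.
      assert (rpow (Rabs (c - phi t)) r <= rpow (Rabs c + Rabs (phi t)) r).
      { apply rpow_le; auto. split; [apply Rabs_pos|].
        pose proof (Rabs_triang c (- phi t)). rewrite Rabs_Ropp in H. unfold Rminus. lra. }
      pose proof (rpow_two_sum (Rabs c) (Rabs (phi t)) r Hr (Rabs_pos _) (Rabs_pos _)). lra.
  - rewrite RInt_plus_R; [|apply ex_RInt_const|apply ex_RInt_scal_R; auto].
    rewrite RInt_const_R, RInt_scal_R by auto. right. ring.
Qed.

Lemma conv_wrap (f : nat -> R -> R) r : 0 < r ->
  (forall n, (1 <= n)%nat -> forall a b, 0 < a -> a <= b -> b < 1 -> ex_RInt (f n) a b) ->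
  (forall n, (1 <= n)%nat -> exists U, forall a b, 0 < a -> a <= b -> b < 1 -> RInt (f n) a b <= U) ->
  (forall n t, 0 <= f n t) ->
  (forall e, 0 < e -> exists N, forall n, (N <= n)%nat -> (1 <= n)%nat ->
      forall a b, 0 < a -> a <= b -> b < 1 -> RInt (f n) a b <= e) ->
  exists D : nat -> R, (forall n, (1 <= n)%nat -> exists I, int01 (f n) I /\ D n = rpow I (/ r)) /\
    Un_cv D 0.
Proof.
  intros Hr Hex Hbd Hpos Hconv.
  set (D := fun n => epsilon (inhabits 0) (fun d => exists I, int01 (f n) I /\ d = rpow I (/ r))).
  assert (HD : forall n, (1 <= n)%nat -> exists I, int01 (f n) I /\ D n = rpow I (/ r)).
  { intros n Hn. unfold D. apply epsilon_spec.
    destruct (Hbd n Hn) as [U HU].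
    destruct (int01_exists (f n) U (Hex n Hn) (HU)) as [I [HI _]].
    exists (rpow I (/ r)), I. auto. }
  exists D. split; auto.
  intros e He. set (e' := rpow (e / 2) r).
  assert (He' : 0 < e') by (apply rpow_pos; lra).
  destruct (Hconv e' He') as [N HN].
  exists (Nat.max N 1). intros n Hn.
  destruct (HD n ltac:(lia)) as [I [HI ->]].
  assert (HI0 : 0 <= I).
  { apply (int01_nonneg _ I HI (Hex n ltac:(lia))). intros; apply Hpos. }
  assert (HIe : I <= e').
  { apply (int01_le _ I e' HI). intros a b Ha Hab Hb _. apply HN; auto; lia || lra. }
  unfold R_dist. rewrite Rminus_0_r. rewrite Rabs_right by (apply Rle_ge, rpow_ge0).
  assert (rpow I (/ r) <= rpow e' (/ r)).
  { apply rpow_le; [left; apply Rinv_0_lt_compat; lra|]. lra. }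
  unfold e' in H. rewrite rpow_inv_r in H by lra. lra.
Qed.

Lemma le_div a b c : 0 < c -> a * c <= b -> a <= b / c.
Proof.
  intros. apply Rmult_le_reg_r with c; auto. unfold Rdiv.
  rewrite Rmult_assoc, Rinv_l, Rmult_1_r by lra. lra.
Qed.

Lemma div_le a b c : 0 < c -> b <= a * c -> b / c <= a.
Proof.
  intros. apply Rmult_le_reg_r with c; auto. unfold Rdiv.
  rewrite Rmult_assoc, Rinv_l, Rmult_1_r by lra. lra.
Qed.

Lemma rpow_2x x r : 0 <= x -> rpow (2 * x) r = rpow 2 r * rpow x r.
Proof. intros. apply rpow_mul; lra. Qed.

Lemma osc_bound al be M r : al <= be -> 1 <= M -> 1 <= r ->
  rpow (be - al) r <= rpow (2 * M) (r - 1) * (be - al) +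
    rpow 2 r * ((if Rlt_dec al (- M) then rpow (Rabs al) r else 0) +
                (if Rlt_dec M be then rpow (Rabs be) r else 0)).
Proof.
  intros Hab HM Hr.
  pose proof (rpow_ge0 2 r). pose proof (rpow_ge0 (2 * M) (r - 1)).
  pose proof (rpow_ge0 (Rabs al) r). pose proof (rpow_ge0 (Rabs be) r).
  destruct (Rlt_dec al (- M)); destruct (Rlt_dec M be).
  - assert (rpow (be - al) r <= rpow (Rabs al + Rabs be) r).
    { apply rpow_le; [lra|]. split; [lra|]. rewrite (Rabs_left al), (Rabs_right be) by lra. lra. }
    pose proof (rpow_two_sum (Rabs al) (Rabs be) r ltac:(lra) (Rabs_pos _) (Rabs_pos _)).
    nra.
  - assert (rpow (be - al) r <= rpow (2 * Rabs al) r).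
    { apply rpow_le; [lra|]. split; [lra|]. rewrite (Rabs_left al) by lra. lra. }
    rewrite rpow_2x in H3 by apply Rabs_pos. nra.
  - assert (rpow (be - al) r <= rpow (2 * Rabs be) r).
    { apply rpow_le; [lra|]. split; [lra|]. rewrite (Rabs_right be) by lra. lra. }
    rewrite rpow_2x in H3 by apply Rabs_pos. nra.
  - destruct (Req_dec (be - al) 0) as [Hz|Hz].
    { rewrite Hz, rpow_0. nra. }
    destruct (Req_dec r 1) as [->|Hr1].
    + replace (1 - 1) with 0 by ring. rewrite rpow_1 by lra.
      rewrite (rpow_E (2 * M) 0) by lra. rewrite Rpower_O by lra. nra.
    + replace (rpow (be - al) r) with (rpow (be - al) (r - 1) * rpow (be - al) 1).
      * rewrite rpow_1 by lra.
        assert (rpow (be - al) (r - 1) <= rpow (2 * M) (r - 1)) by (apply rpow_le; lra).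
        assert (0 <= be - al) by lra. nra.
      * rewrite <- rpow_add_exp by lra. f_equal. ring.
Qed.

Lemma cpt_piece a b n k : (1 <= n)%nat -> a <= b ->
  cpt a b n k = cpt a b n (S k) \/
  (INR k / INR n <= cpt a b n k /\ cpt a b n (S k) <= INR (S k) / INR n).
Proof.
  intros Hn Hab. unfold cpt.
  pose proof (INR_div_le n k (S k) Hn ltac:(lia)).
  set (u := INR k / INR n) in *. set (v := INR (S k) / INR n) in *.
  destruct (Rle_lt_dec v a).
  - left. rewrite (Rmax_left a (Rmin b v)) by (pose proof (Rmin_r b v); lra).
    rewrite (Rmax_left a (Rmin b u)) by (pose proof (Rmin_r b u); lra). reflexivity.
  - destruct (Rle_lt_dec b u).
    + left. rewrite (Rmin_left b u), (Rmin_left b v) by lra. reflexivity.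
    + right. rewrite (Rmin_right b u) by lra. split; [apply Rmax_r|].
      apply Rmax_lub; [lra|apply Rmin_r].
Qed.

Section Interior.
Variables (F : R -> R) (r : R) (n : nat) (x : nat -> R) (M d EL ER TL TR : R).
Hypothesis HF : is_cdf F.
Hypothesis Hr : 1 <= r.
Hypothesis Hn : (4 <= n)%nat.
Hypothesis Hx : in_Xi n x.
Hypothesis HM : 1 <= M.
Hypothesis Hd1 : 1 / INR n <= d.
Hypothesis Hd2 : d <= 1/4.
Hypothesis HMd1 : Rabs (qf F d) <= M.
Hypothesis HMd2 : Rabs (qf F (1 - d)) <= M.
Hypothesis HIC : forall k, (1 <= k)%nat -> (k <= n - 2)%nat ->
  qf F (INR k / INR n) <= x k <= qf F (INR (S k) / INR n).
Hypothesis HEL : forall u v, 0 < u -> u <= v -> v <= 1 / INR n -> RInt (gk F x r 0) u v <= EL.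
Hypothesis HER : forall u v, 1 - 1 / INR n <= u -> u <= v -> v < 1 ->
  RInt (gk F x r (n - 1)) u v <= ER.
Hypothesis HEL0 : 0 <= EL.
Hypothesis HER0 : 0 <= ER.
Hypothesis HTL : RInt (fun t => rpow (Rabs (qf F t)) r) (1 / INR n) d <= TL.
Hypothesis HTR : RInt (fun t => rpow (Rabs (qf F t)) r) (1 - d) (INR (n - 1) / INR n) <= TR.

Let q := qf F.
Let h := / INR n.
Let al k := q (INR k / INR n).
Let be k := q (INR (S k) / INR n).
Let Ak k := if Rlt_dec (al k) (- M) then rpow (Rabs (al k)) r else 0.
Let Bk k := if Rlt_dec M (be k) then rpow (Rabs (be k)) r else 0.

Lemma nR : 4 <= INR n.
Proof. assert (INR 4 <= INR n) by (apply le_INR; auto). simpl in H; lra. Qed.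

Lemma kn_in k : (k <= n)%nat -> 0 <= INR k / INR n <= 1.
Proof.
  intros. pose proof nR. split.
  - apply Rdiv_le_0_compat; [apply pos_INR|lra].
  - apply Rmult_le_reg_r with (INR n); [lra|]. unfold Rdiv. rewrite Rmult_assoc, Rinv_l by lra.
    rewrite Rmult_1_r, Rmult_1_l. apply le_INR; auto.
Qed.

Lemma kn_pos k : (1 <= k)%nat -> 0 < INR k / INR n.
Proof. intros. pose proof nR. apply Rdiv_lt_0_compat; [apply lt_0_INR; lia|lra]. Qed.

Lemma kn_lt1 k : (k < n)%nat -> INR k / INR n < 1.
Proof.
  intros. pose proof nR. apply Rmult_lt_reg_r with (INR n); [lra|]. unfold Rdiv.
  rewrite Rmult_assoc, Rinv_l by lra. rewrite Rmult_1_r, Rmult_1_l. apply lt_INR; auto.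
Qed.

Lemma kn_step k : INR (S k) / INR n - INR k / INR n = h.
Proof. pose proof nR. unfold h. rewrite S_INR. field. lra. Qed.

Lemma Mono_q : Mono q.
Proof. apply qf_Mono; auto. Qed.

Lemma interior_term k a b : 0 < a -> a <= b -> b < 1 -> (1 <= k)%nat -> (k <= n - 2)%nat ->
  RInt (gk F x r k) (cpt a b n k) (cpt a b n (S k)) <= h * rpow (be k - al k) r.
Proof.
  intros Ha Hab Hb Hk1 Hk2. pose proof nR.
  assert (Hn1 : (1 <= n)%nat) by lia.
  pose proof (cpt_bounds a b n k Hab). pose proof (cpt_bounds a b n (S k) Hab).
  pose proof (cpt_mono a b n k Hn1 Hab).
  assert (Hh : 0 <= h) by (unfold h; left; apply Rinv_0_lt_compat; lra).
  assert (Hex : ex_RInt (gk F x r k) (cpt a b n k) (cpt a b n (S k))).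
  { apply ex_RInt_powdiff; auto; [apply Mono_q|lra|lra|lra]. }
  destruct (cpt_piece a b n k Hn1 Hab) as [He|[Hc1 Hc2]].
  - rewrite He, RInt_point_R. pose proof (rpow_ge0 (be k - al k) r). nra.
  - eapply Rle_trans.
    + apply RInt_le_const with (c := rpow (be k - al k) r); auto.
      intros t Ht. unfold gk. apply rpow_le; [lra|]. split; [apply Rabs_pos|].
      pose proof (kn_pos k Hk1).
      assert (Hsk : INR (S k) / INR n < 1) by (apply kn_lt1; lia).
      assert (al k <= q t) by (apply Mono_q; lra).
      assert (q t <= be k) by (apply Mono_q; lra).
      pose proof (HIC k Hk1 Hk2). unfold al, be, q in *.
      unfold Rabs. destruct (Rcase_abs _); lra.
    + pose proof (kn_step k). pose proof (rpow_ge0 (be k - al k) r).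
      apply Rmult_le_compat_r; lra.
Qed.

Lemma hpos : 0 < h.
Proof. pose proof nR. unfold h. apply Rinv_0_lt_compat. lra. Qed.

Lemma A_bound k : (1 <= k)%nat -> (k <= n - 3)%nat ->
  h * Ak (S k) <= RInt (sig q M r) (INR k / INR n) (INR (S k) / INR n).
Proof.
  intros Hk1 Hk2. pose proof hpos. pose proof (kn_pos k Hk1).
  assert (Hs : INR (S k) / INR n < 1) by (apply kn_lt1; lia).
  pose proof (INR_div_le n k (S k) ltac:(lia) ltac:(lia)).
  rewrite <- (kn_step k). apply RInt_ge_const; [lra| |].
  - apply ex_RInt_sig; auto; try lra. apply Mono_q.
  - intros t Ht. unfold Ak, sig, al.
    assert (q t <= q (INR (S k) / INR n)) by (apply Mono_q; lra).
    destruct (Rlt_dec (q (INR (S k) / INR n)) (- M)).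
    + destruct (Rlt_dec (q t) (- M)); [|lra]. apply rpow_le; [lra|].
      rewrite !Rabs_left by lra. split; lra.
    + destruct (Rlt_dec (q t) (- M)); [apply rpow_ge0|lra].
Qed.

Lemma B_bound k : (1 <= k)%nat -> (k <= n - 3)%nat ->
  h * Bk k <= RInt (rho q M r) (INR (S k) / INR n) (INR (S (S k)) / INR n).
Proof.
  intros Hk1 Hk2. pose proof hpos. pose proof (kn_pos (S k) ltac:(lia)).
  assert (Hs : INR (S (S k)) / INR n < 1) by (apply kn_lt1; lia).
  pose proof (INR_div_le n (S k) (S (S k)) ltac:(lia) ltac:(lia)).
  rewrite <- (kn_step (S k)). apply RInt_ge_const; [lra| |].
  - apply ex_RInt_rho; auto; try lra. apply Mono_q.
  - intros t Ht. unfold Bk, rho, be.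
    assert (q (INR (S k) / INR n) <= q t) by (apply Mono_q; lra).
    destruct (Rlt_dec M (q (INR (S k) / INR n))).
    + destruct (Rlt_dec M (q t)); [|lra]. apply rpow_le; [lra|].
      rewrite !Rabs_right by lra. split; lra.
    + destruct (Rlt_dec M (q t)); [apply rpow_ge0|lra].
Qed.

Let PL := h * rpow (Rabs (q (1 / INR n))) r.
Let PR := h * rpow (Rabs (q (INR (n - 1) / INR n))) r.
Let W := rpow (2 * M) (r - 1).

Lemma sig_int : RInt (sig q M r) (1 / INR n) (INR (n - 2) / INR n) <= TL.
Proof.
  pose proof nR.
  assert (H1 : 0 < 1 / INR n) by (apply Rdiv_lt_0_compat; lra).
  assert (H2 : 1/2 <= INR (n - 2) / INR n).
  { rewrite minus_INR by lia. apply le_div; [lra|]. simpl. lra. }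
  assert (H3 : INR (n - 2) / INR n < 1) by (apply kn_lt1; lia).
  assert (Hex : forall u v, 0 < u -> u <= v -> v < 1 -> ex_RInt (sig q M r) u v).
  { intros. apply ex_RInt_sig; auto; try lra. apply Mono_q. }
  rewrite <- (RInt_Chasles_R _ (1 / INR n) d) by (apply Hex; lra).
  assert (RInt (sig q M r) (1 / INR n) d <= RInt (fun t => rpow (Rabs (qf F t)) r) (1 / INR n) d).
  { apply RInt_le; [lra|apply Hex; lra|apply ex_RInt_pow; auto; try lra; apply Mono_q|].
    intros t Ht. unfold sig. destruct (Rlt_dec (q t) (- M)); [unfold q; lra|apply rpow_ge0]. }
  assert (RInt (sig q M r) d (INR (n - 2) / INR n) <= (INR (n - 2) / INR n - d) * 0).
  { apply RInt_le_const; [lra|apply Hex; lra|]. intros t Ht. unfold sig.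
    assert (q d <= q t) by (apply Mono_q; lra).
    destruct (Rlt_dec (q t) (- M)); [|lra]. exfalso. unfold Rabs in HMd1.
    destruct (Rcase_abs (qf F d)); unfold q in *; lra. }
  lra.
Qed.

Lemma rho_int : RInt (rho q M r) (INR 2 / INR n) (INR (n - 1) / INR n) <= TR.
Proof.
  pose proof nR.
  assert (H1 : 0 < INR 2 / INR n) by (apply kn_pos; lia).
  assert (H2 : INR 2 / INR n <= 1/2).
  { apply div_le; [lra|]. simpl. lra. }
  assert (H3 : INR (n - 1) / INR n = 1 - 1 / INR n).
  { rewrite minus_INR by lia. simpl. field. lra. }
  assert (H4 : INR (n - 1) / INR n < 1) by (apply kn_lt1; lia).
  assert (Hex : forall u v, 0 < u -> u <= v -> v < 1 -> ex_RInt (rho q M r) u v).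
  { intros. apply ex_RInt_rho; auto; try lra. apply Mono_q. }
  rewrite <- (RInt_Chasles_R _ (INR 2 / INR n) (1 - d)) by (apply Hex; lra).
  assert (RInt (rho q M r) (1 - d) (INR (n - 1) / INR n) <=
          RInt (fun t => rpow (Rabs (qf F t)) r) (1 - d) (INR (n - 1) / INR n)).
  { apply RInt_le; [lra|apply Hex; lra|apply ex_RInt_pow; auto; try lra; apply Mono_q|].
    intros t Ht. unfold rho. destruct (Rlt_dec M (q t)); [unfold q; lra|apply rpow_ge0]. }
  assert (RInt (rho q M r) (INR 2 / INR n) (1 - d) <= (1 - d - INR 2 / INR n) * 0).
  { apply RInt_le_const; [lra|apply Hex; lra|]. intros t Ht. unfold rho.
    assert (q t <= q (1 - d)) by (apply Mono_q; lra).
    destruct (Rlt_dec M (q t)); [|lra]. exfalso. unfold Rabs in HMd2.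
    destruct (Rcase_abs (qf F (1 - d))); unfold q in *; lra. }
  lra.
Qed.

Lemma interior_sum a b : 0 < a -> a <= b -> b < 1 ->
  sumk (fun k => RInt (gk F x r (S k)) (cpt a b n (S k)) (cpt a b n (S (S k)))) (n - 2) <=
  h * W * (q (INR (n - 1) / INR n) - q (1 / INR n)) + rpow 2 r * (PL + TL + TR + PR).
Proof.
  intros Ha Hab Hb. pose proof hpos. pose proof (rpow_ge0 2 r).
  assert (HW : 0 <= W) by apply rpow_ge0.
  eapply Rle_trans.
  { apply sumk_le with (g' := fun k => h * W * (be (S k) - al (S k)) +
                          rpow 2 r * (h * Ak (S k) + h * Bk (S k))).
    intros k Hk. eapply Rle_trans; [apply interior_term; auto; lia|].
    assert (al (S k) <= be (S k)).
    { unfold al, be. apply Mono_q; [apply kn_pos; lia| |apply kn_lt1; lia].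
      apply INR_div_le; lia. }
    pose proof (osc_bound (al (S k)) (be (S k)) M r H1 HM Hr).
    fold W in H2. unfold Ak, Bk. nra. }
  rewrite sumk_plus.
  rewrite (sumk_scal (fun k => be (S k) - al (S k)) (h * W)).
  rewrite (sumk_scal (fun k => h * Ak (S k) + h * Bk (S k)) (rpow 2 r)).
  assert (Htele : sumk (fun k => be (S k) - al (S k)) (n - 2) =
                  q (INR (n - 1) / INR n) - q (1 / INR n)).
  { pose proof (sumk_tele (fun k => q (INR (S k) / INR n)) (n - 2)) as T.
    cbv beta in T. replace (S (n - 2)) with (n - 1)%nat in T by lia. exact T. }
  rewrite Htele.
  assert (HA : sumk (fun k => h * Ak (S k) + h * Bk (S k)) (n - 2) <= PL + TL + TR + PR).
  { rewrite sumk_plus. replace (n - 2)%nat with (S (n - 3)) by lia.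
    rewrite sumk_first. simpl sumk at 2.
    assert (E1 : h * Ak 1 <= PL).
    { unfold Ak, PL, al. replace (INR 1) with 1 by reflexivity.
      destruct (Rlt_dec _ _); [lra|]. pose proof (rpow_ge0 (Rabs (q (1 / INR n))) r). nra. }
    assert (E2 : h * Bk (S (n - 3)) <= PR).
    { unfold Bk, PR, be. replace (S (S (n - 3))) with (n - 1)%nat by lia.
      destruct (Rlt_dec _ _); [lra|]. pose proof (rpow_ge0 (Rabs (q (INR (n - 1) / INR n))) r). nra. }
    assert (E3 : sumk (fun k => h * Ak (S (S k))) (n - 3) <=
                 RInt (sig q M r) (1 / INR n) (INR (n - 2) / INR n)).
    { destruct (sumk_RInt (sig q M r) (fun k => INR (S k) / INR n) (n - 3)) as [_ Hs].
      { intros k Hk. apply ex_RInt_sig; auto; try lra; [apply Mono_q|apply kn_pos; lia| |apply kn_lt1; lia].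
        apply INR_div_le; lia. }
      replace (1 / INR n) with (INR 1 / INR n) by reflexivity.
      replace (INR (n - 2)) with (INR (S (n - 3))) by (f_equal; lia).
      rewrite <- Hs. apply sumk_le. intros k Hk. apply A_bound; lia. }
    assert (E4 : sumk (fun k => h * Bk (S k)) (n - 3) <=
                 RInt (rho q M r) (INR 2 / INR n) (INR (n - 1) / INR n)).
    { destruct (sumk_RInt (rho q M r) (fun k => INR (S (S k)) / INR n) (n - 3)) as [_ Hs].
      { intros k Hk. apply ex_RInt_rho; auto; try lra; [apply Mono_q|apply kn_pos; lia| |apply kn_lt1; lia].
        apply INR_div_le; lia. }
      replace (INR (n - 1)) with (INR (S (S (n - 3)))) by (f_equal; lia).
      rewrite <- Hs. apply sumk_le. intros k Hk. apply B_bound; lia. }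
    pose proof sig_int. pose proof rho_int. lra. }
  replace (INR 1) with 1 by reflexivity.
  assert (rpow 2 r * sumk (fun k => h * Ak (S k) + h * Bk (S k)) (n - 2) <=
          rpow 2 r * (PL + TL + TR + PR)) by (apply Rmult_le_compat_l; lra).
  lra.
Qed.

Lemma main_bound a b : 0 < a -> a <= b -> b < 1 ->
  RInt (fvec F n x r) a b <=
  EL + ER + h * W * (q (INR (n - 1) / INR n) - q (1 / INR n)) + rpow 2 r * (PL + TL + TR + PR).
Proof.
  intros Ha Hab Hb. pose proof nR.
  assert (Hn1 : (1 <= n)%nat) by lia.
  destruct (fvec_decomp F n x r a b HF ltac:(lra) Hn1 Hx Ha Hab Hb) as [_ ->].
  rewrite (sumk_split3 _ n) by lia.
  pose proof (interior_sum a b Ha Hab Hb).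
  assert (T0 : RInt (gk F x r 0) (cpt a b n 0) (cpt a b n 1) <= EL).
  { destruct (cpt_piece a b n 0 Hn1 Hab) as [He|[Hc1 Hc2]].
    - rewrite He, RInt_point_R. lra.
    - pose proof (cpt_bounds a b n 0 Hab). pose proof (cpt_mono a b n 0 Hn1 Hab).
      apply HEL; try lra. replace (1 / INR n) with (INR 1 / INR n) by reflexivity. lra. }
  assert (T1 : RInt (gk F x r (n - 1)) (cpt a b n (n - 1)) (cpt a b n (S (n - 1))) <= ER).
  { destruct (cpt_piece a b n (n - 1) Hn1 Hab) as [He|[Hc1 Hc2]].
    - rewrite He, RInt_point_R. lra.
    - pose proof (cpt_bounds a b n (n - 1) Hab). pose proof (cpt_bounds a b n (S (n - 1)) Hab).
      pose proof (cpt_mono a b n (n - 1) Hn1 Hab).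
      assert (INR (n - 1) / INR n = 1 - 1 / INR n) by (rewrite minus_INR by lia; simpl; field; lra).
      apply HER; lra. }
  lra.
Qed.

End Interior.

Lemma small_inv m : 0 < m -> exists N, (1 <= N)%nat /\ forall n, (N <= n)%nat -> 1 / INR n <= m.
Proof.
  intros Hm. destruct (archimed (/ m)) as [Hup _].
  set (N := S (Z.to_nat (up (/ m)))).
  assert (HN : / m < INR N).
  { unfold N. rewrite S_INR. destruct (Z_lt_le_dec (up (/ m)) 0).
    - assert (IZR (up (/m)) <= -1) by (apply IZR_le; lia).
      pose proof (Rinv_0_lt_compat m Hm). pose proof (pos_INR (Z.to_nat (up (/ m)))). lra.
    - rewrite INR_IZR_INZ, Z2Nat.id by lia. lra. }
  exists N. split; [unfold N; lia|]. intros n Hn.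
  assert (INR N <= INR n) by (apply le_INR; auto).
  assert (0 < / m) by (apply Rinv_0_lt_compat; lra).
  apply div_le; [lra|]. apply Rmult_le_reg_l with (/ m); [lra|].
  rewrite <- Rmult_assoc, Rinv_l, Rmult_1_l by lra. lra.
Qed.

Lemma asym F r I (x : nat -> nat -> R) : is_cdf F -> 1 <= r -> Good r (qf F) I ->
  (forall n, (4 <= n)%nat -> in_Xi n (x n)) ->
  (forall n k, (4 <= n)%nat -> (1 <= k)%nat -> (k <= n - 2)%nat ->
     qf F (INR k / INR n) <= x n k <= qf F (INR (S k) / INR n)) ->
  (forall e, 0 < e -> exists N, forall n, (N <= n)%nat -> (4 <= n)%nat ->
     (forall u v, 0 < u -> u <= v -> v <= 1 / INR n -> RInt (gk F (x n) r 0) u v <= e) /\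
     (forall u v, 1 - 1 / INR n <= u -> u <= v -> v < 1 -> RInt (gk F (x n) r (n - 1)) u v <= e)) ->
  forall e, 0 < e -> exists N, forall n, (N <= n)%nat -> (1 <= n)%nat ->
    forall a b, 0 < a -> a <= b -> b < 1 -> RInt (fvec F n (x n) r) a b <= e.
Proof.
  intros HF Hr HG Hsort HIC HE e He.
  set (K := rpow 2 r). assert (HK : 0 <= K) by apply rpow_ge0.
  assert (Hpos1 : 0 < e / (8 * (K + 1))) by (apply Rdiv_lt_0_compat; lra).
  destruct (tailL r _ I ltac:(lra) HG _ Hpos1) as [dL [HdL HTL]].
  destruct (tailR r _ I ltac:(lra) HG _ Hpos1) as [dR [HdR HTR]].
  set (d := Rmin dL dR).
  assert (Hd : 0 < d <= 1/4).
  { unfold d. split; [apply Rmin_glb_lt; lra|]. pose proof (Rmin_l dL dR). lra. }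
  assert (HddL : d <= dL) by apply Rmin_l.
  assert (HddR : d <= dR) by apply Rmin_r.
  set (M := Rmax 1 (Rmax (Rabs (qf F d)) (Rabs (qf F (1 - d))))).
  assert (HM1 : 1 <= M) by apply Rmax_l.
  assert (HM2 : Rabs (qf F d) <= M).
  { unfold M. eapply Rle_trans; [|apply Rmax_r]. apply Rmax_l. }
  assert (HM3 : Rabs (qf F (1 - d)) <= M).
  { unfold M. eapply Rle_trans; [|apply Rmax_r]. apply Rmax_r. }
  set (W := rpow (2 * M) (r - 1)). assert (HW : 0 <= W) by apply rpow_ge0.
  set (eta := e / (8 * (W + 1) * (K + 1))).
  assert (Heta : 0 < eta) by (unfold eta; apply Rdiv_lt_0_compat; nra).
  destruct (V2L r _ I ltac:(lra) HG eta Heta) as [hL [HhL HVL]].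
  destruct (V2R r _ I ltac:(lra) HG eta Heta) as [hR [HhR HVR]].
  destruct (HE (e / 8) ltac:(lra)) as [NE HNE].
  destruct (small_inv (Rmin (Rmin d eta) (Rmin hL hR))) as [N0 [HN0 HN0']].
  { repeat apply Rmin_glb_lt; lra. }
  exists (Nat.max (Nat.max N0 NE) 4). intros n Hn Hn1 a b Ha Hab Hb.
  assert (Hn4 : (4 <= n)%nat) by lia.
  assert (Hnr : 4 <= INR n) by (assert (INR 4 <= INR n) by (apply le_INR; auto); simpl in H; lra).
  pose proof (HN0' n ltac:(lia)) as Hsm.
  pose proof (Rmin_l (Rmin d eta) (Rmin hL hR)). pose proof (Rmin_r (Rmin d eta) (Rmin hL hR)).
  pose proof (Rmin_l d eta). pose proof (Rmin_r d eta). pose proof (Rmin_l hL hR). pose proof (Rmin_r hL hR).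
  assert (Hh0 : 0 < 1 / INR n) by (apply Rdiv_lt_0_compat; lra).
  destruct (HNE n ltac:(lia) Hn4) as [HEL HER].
  assert (Hnm1 : INR (n - 1) / INR n = 1 - 1 / INR n) by (rewrite minus_INR by lia; simpl; field; lra).
  assert (Hbound := main_bound F r n (x n) M d (e/8) (e/8) (e / (8 * (K + 1))) (e / (8 * (K + 1)))
    HF Hr Hn4 (Hsort n Hn4) HM1 ltac:(lra) ltac:(lra) HM2 HM3 (fun k => HIC n k Hn4) HEL HER ltac:(lra) ltac:(lra)
    ltac:(apply HTL; lra) ltac:(rewrite Hnm1; apply HTR; lra) a b Ha Hab Hb).
  fold K in Hbound. fold W in Hbound.
  set (q := qf F) in *.
  set (PL := / INR n * rpow (Rabs (q (1 / INR n))) r) in *.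
  set (PR := / INR n * rpow (Rabs (q (INR (n - 1) / INR n))) r) in *.
  assert (HPL : PL <= eta).
  { unfold PL. replace (/ INR n) with (1 / INR n) by (field; lra). apply HVL. lra. }
  assert (HPR : PR <= eta).
  { unfold PR. replace (/ INR n) with (1 / INR n) by (field; lra). rewrite Hnm1. apply HVR. lra. }
  assert (HPL0 : 0 <= PL) by (unfold PL; pose proof (rpow_ge0 (Rabs (q (1 / INR n))) r);
    assert (0 < / INR n) by (apply Rinv_0_lt_compat; lra); nra).
  assert (HPR0 : 0 <= PR) by (unfold PR; pose proof (rpow_ge0 (Rabs (q (INR (n - 1) / INR n))) r);
    assert (0 < / INR n) by (apply Rinv_0_lt_compat; lra); nra).
  assert (Hdiff : / INR n * (q (INR (n - 1) / INR n) - q (1 / INR n)) <= 2 * eta + PL + PR).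
  { pose proof (rpow_le_1_plus (Rabs (q (1 / INR n))) 1 r (Rabs_pos _) ltac:(lra) Hr).
    pose proof (rpow_le_1_plus (Rabs (q (INR (n - 1) / INR n))) 1 r (Rabs_pos _) ltac:(lra) Hr).
    rewrite rpow_1 in H5, H6 by apply Rabs_pos.
    assert (Hi : 0 < / INR n) by (apply Rinv_0_lt_compat; lra).
    assert (/ INR n <= eta) by (replace (/ INR n) with (1 / INR n) by (field; lra); lra).
    assert (/ INR n * (q (INR (n - 1) / INR n) - q (1 / INR n)) <=
            / INR n * (1 + rpow (Rabs (q (INR (n - 1) / INR n))) r) +
            / INR n * (1 + rpow (Rabs (q (1 / INR n))) r)).
    { rewrite <- Rmult_plus_distr_l. apply Rmult_le_compat_l; [lra|].
      pose proof (Rle_abs (q (INR (n - 1) / INR n))). pose proof (Rle_abs (- q (1 / INR n))).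
      rewrite Rabs_Ropp in H9. lra. }
    unfold PL, PR. lra. }
  assert (HWd : / INR n * W * (q (INR (n - 1) / INR n) - q (1 / INR n)) <= W * (2 * eta + PL + PR)).
  { replace (/ INR n * W * (q (INR (n - 1) / INR n) - q (1 / INR n))) with
      (W * (/ INR n * (q (INR (n - 1) / INR n) - q (1 / INR n)))) by ring.
    apply Rmult_le_compat_l; lra. }
  assert (Hfin : W * (2 * eta + PL + PR) + K * (PL + e / (8 * (K + 1)) + e / (8 * (K + 1)) + PR) <= 3 * e / 4).
  { assert (W * (2 * eta + PL + PR) <= W * (4 * eta)) by (apply Rmult_le_compat_l; lra).
    assert (K * (PL + e / (8 * (K + 1)) + e / (8 * (K + 1)) + PR) <= K * (2 * eta) + K * (e / (4 * (K + 1)))).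
    { replace (K * (2 * eta) + K * (e / (4 * (K + 1)))) with
        (K * (2 * eta + e / (4 * (K + 1)))) by ring.
      apply Rmult_le_compat_l; [lra|]. replace (e / (4 * (K + 1))) with (2 * (e / (8 * (K + 1)))) by (field; lra). lra. }
    assert (K * (e / (4 * (K + 1))) <= e / 4).
    { replace (K * (e / (4 * (K + 1)))) with ((e / 4) * (K / (K + 1))) by (field; lra).
      assert (K / (K + 1) <= 1) by (apply div_le; lra).
      assert (0 <= e / 4) by lra. nra. }
    assert ((W + K) * (4 * eta) <= e / 2).
    { unfold eta. replace ((W + K) * (4 * (e / (8 * (W + 1) * (K + 1))))) with
        ((e / 2) * ((W + K) / ((W + 1) * (K + 1)))) by (field; nra).
      assert ((W + K) / ((W + 1) * (K + 1)) <= 1) by (apply div_le; nra).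
      assert (0 <= e / 2) by lra. nra. }
    nra. }
  lra.
Qed.

Lemma INRn_pos n : (1 <= n)%nat -> 0 < INR n.
Proof. intros. apply lt_0_INR. lia. Qed.

Lemma mid_in n i : (i < n)%nat -> 0 < (2 * INR i + 1) / (2 * INR n) < 1.
Proof.
  intros. assert (0 < INR n) by (apply INRn_pos; lia). pose proof (pos_INR i).
  assert (INR i + 1 <= INR n) by (rewrite <- S_INR; apply le_INR; lia).
  split.
  - apply Rdiv_lt_0_compat; lra.
  - apply Rmult_lt_reg_r with (2 * INR n); [lra|]. unfold Rdiv.
    rewrite Rmult_assoc, Rinv_l, Rmult_1_r by lra. lra.
Qed.

Lemma part2 F r : 1 <= r -> is_cdf F -> in_Pr r F ->
  exists D : nat -> R,
     (forall n, (1 <= n)%nat ->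
        dist_r r (emp_cdf n (fun i => qf F ((2 * INR i + 1) / (2 * INR n)))) F (D n)) /\
     Un_cv D 0.
Proof.
  intros Hr HF HP.
  destruct (good_q F r ltac:(lra) HF HP) as [I HG].
  set (y := fun n i => qf F ((2 * INR i + 1) / (2 * INR n))).
  assert (Hm := qf_Mono F HF).
  assert (Hsort : forall n, (1 <= n)%nat -> in_Xi n (y n)).
  { intros n Hn i j Hij Hj. unfold y. apply Hm.
    - apply mid_in; lia.
    - assert (0 < INR n) by (apply INRn_pos; lia).
      apply Rmult_le_compat_r; [left; apply Rinv_0_lt_compat; lra|].
      assert (INR i <= INR j) by (apply le_INR; auto). lra.
    - apply mid_in; lia. }
  destruct (conv_wrap (fun n => fvec F n (y n) r) r ltac:(lra)) as [D [HD1 HD2]].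
  - intros n Hn a b Ha Hab Hb. apply fvec_ex; auto; lra.
  - intros n Hn. apply (fvec_bound F r r n (y n) I); auto; lra.
  - intros; apply fvec_nonneg.
  - apply (asym F r I y HF Hr HG).
    + intros n Hn. apply Hsort. lia.
    + intros n k Hn Hk1 Hk2. assert (0 < INR n) by (apply INRn_pos; lia).
      assert (Hkn : (k < n)%nat) by lia.
      pose proof (mid_in n k Hkn). pose proof (pos_INR k).
      assert (INR k + 1 <= INR n) by (rewrite <- S_INR; apply le_INR; lia).
      unfold y. split; apply Hm.
      * apply Rdiv_lt_0_compat; [apply lt_0_INR; lia|lra].
      * apply le_div; [lra|]. replace (INR k / INR n * (2 * INR n)) with (2 * INR k) by (field; lra). lra.
      * lra.
      * lra.
      * apply div_le; [lra|]. rewrite S_INR. replace ((INR k + 1) / INR n * (2 * INR n)) with (2 * INR k + 2) by (field; lra). lra.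
      * apply kn_lt1; lia.
    + intros e He. set (K := rpow 2 r). assert (HK : 0 <= K) by apply rpow_ge0.
      set (eta := e / (3 * (K + 1))).
      assert (Heta : 0 < eta) by (unfold eta; apply Rdiv_lt_0_compat; lra).
      destruct (tailL r _ I ltac:(lra) HG eta Heta) as [dL [HdL HTL]].
      destruct (tailR r _ I ltac:(lra) HG eta Heta) as [dR [HdR HTR]].
      destruct (V2L r _ I ltac:(lra) HG eta Heta) as [hL [HhL HVL]].
      destruct (V2R r _ I ltac:(lra) HG eta Heta) as [hR [HhR HVR]].
      destruct (small_inv (Rmin (Rmin dL dR) (Rmin hL hR))) as [N0 [HN0 HN0']].
      { repeat apply Rmin_glb_lt; lra. }
      assert (HKe : K * (3 * eta) <= e).
      { unfold eta. replace (K * (3 * (e / (3 * (K + 1))))) with (e * (K / (K + 1))) by (field; lra).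
        assert (K / (K + 1) <= 1) by (apply div_le; lra). nra. }
      exists N0. intros n Hn Hn4.
      pose proof (HN0' n Hn) as Hsm.
      pose proof (Rmin_l (Rmin dL dR) (Rmin hL hR)). pose proof (Rmin_r (Rmin dL dR) (Rmin hL hR)).
      pose proof (Rmin_l dL dR). pose proof (Rmin_r dL dR). pose proof (Rmin_l hL hR). pose proof (Rmin_r hL hR).
      assert (Hnr : 0 < INR n) by (apply INRn_pos; lia).
      assert (Hh0 : 0 < 1 / INR n) by (apply Rdiv_lt_0_compat; lra).
      assert (Hh1 : 1 / INR n <= 1/4).
      { apply div_le; [lra|]. assert (INR 4 <= INR n) by (apply le_INR; auto). simpl in H5. lra. }
      split.
      * intros u v Hu Huv Hv. unfold gk, y.
        replace ((2 * INR 0 + 1) / (2 * INR n)) with (1 / (2 * INR n)) by (simpl; field; lra).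
        eapply Rle_trans; [apply end_simple; auto; lra|]. fold K.
        assert (G1 : (v - u) * rpow (Rabs (qf F (1 / (2 * INR n)))) r <= 2 * eta).
        { assert (Hc : 1 / (2 * INR n) * rpow (Rabs (qf F (1 / (2 * INR n)))) r <= eta).
          { apply HVL. split; [apply Rdiv_lt_0_compat; lra|].
            assert (1 / (2 * INR n) <= 1 / INR n) by (apply div_le; [lra|]; field_simplify; lra). lra. }
          pose proof (rpow_ge0 (Rabs (qf F (1 / (2 * INR n)))) r).
          assert (v - u <= 2 * (1 / (2 * INR n))) by (replace (2 * (1 / (2 * INR n))) with (1 / INR n) by (field; lra); lra).
          nra. }
        assert (G2 : RInt (fun t => rpow (Rabs (qf F t)) r) u v <= eta) by (apply HTL; lra).
        assert (K * ((v - u) * rpow (Rabs (qf F (1 / (2 * INR n)))) r + RInt (fun t => rpow (Rabs (qf F t)) r) u v) <= K * (3 * eta)) by (apply Rmult_le_compat_l; lra).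
        lra.
      * intros u v Hu Huv Hv. unfold gk, y.
        replace ((2 * INR (n - 1) + 1) / (2 * INR n)) with (1 - 1 / (2 * INR n))
          by (rewrite minus_INR by lia; simpl; field; lra).
        eapply Rle_trans; [apply end_simple; auto; lra|]. fold K.
        assert (G1 : (v - u) * rpow (Rabs (qf F (1 - 1 / (2 * INR n)))) r <= 2 * eta).
        { assert (Hc : 1 / (2 * INR n) * rpow (Rabs (qf F (1 - 1 / (2 * INR n)))) r <= eta).
          { apply HVR. split; [apply Rdiv_lt_0_compat; lra|].
            assert (1 / (2 * INR n) <= 1 / INR n) by (apply div_le; [lra|]; field_simplify; lra). lra. }
          pose proof (rpow_ge0 (Rabs (qf F (1 - 1 / (2 * INR n)))) r).
          assert (v - u <= 2 * (1 / (2 * INR n))) by (replace (2 * (1 / (2 * INR n))) with (1 / INR n) by (field; lra); lra).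
          nra. }
        assert (G2 : RInt (fun t => rpow (Rabs (qf F t)) r) u v <= eta) by (apply HTR; lra).
        assert (K * ((v - u) * rpow (Rabs (qf F (1 - 1 / (2 * INR n)))) r + RInt (fun t => rpow (Rabs (qf F t)) r) u v) <= K * (3 * eta)) by (apply Rmult_le_compat_l; lra).
        lra.
  - exists D. split; [exact HD1|exact HD2].
Qed.

Lemma gain x z w s : 1 <= s -> (z = x \/ (x < z /\ z <= w) \/ (w <= z /\ z < x)) ->
  rpow (Rabs (z - w)) s + rpow (Rabs (x - z)) s <= rpow (Rabs (x - w)) s.
Proof.
  intros Hs [->|[[H1 H2]|[H1 H2]]].
  - replace (x - x) with 0 by ring. rewrite Rabs_R0, rpow_0. lra.
  - rewrite (Rabs_left1 (z - w)), (Rabs_left (x - z)), (Rabs_left (x - w)) by lra.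
    replace (- (x - w)) with (- (z - w) + - (x - z)) by ring.
    apply rpow_superadd; lra.
  - rewrite (Rabs_right (z - w)), (Rabs_right (x - z)), (Rabs_right (x - w)) by lra.
    replace (x - w) with ((z - w) + (x - z)) by ring.
    apply rpow_superadd; lra.
Qed.

Lemma sumk_zero g m : (forall k, (k < m)%nat -> 0 <= g k) -> sumk g m <= 0 ->
  forall k, (k < m)%nat -> g k = 0.
Proof.
  intros Hp Hs k Hk. pose proof (sumk_term_le g m k Hp Hk). pose proof (Hp k Hk). lra.
Qed.

Definition zc (q : R -> R) (n : nat) (x : nat -> R) (k : nat) : R :=
  if Nat.eqb k 0 then Rmin (x 0%nat) (q (INR 1 / INR n))
  else if Nat.eqb k (n - 1) then Rmax (x (n - 1)%nat) (q (INR (n - 1) / INR n))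
  else Rmin (Rmax (x k) (q (INR k / INR n))) (q (INR (S k) / INR n)).

Definition z2 (q : R -> R) (n : nat) (x : nat -> R) (k : nat) : R :=
  if Nat.eqb k 0 then q (INR 1 / INR n)
  else if Nat.eqb k (n - 1) then q (INR (n - 1) / INR n)
  else x k.

Section Part1.
Variables (F : R -> R) (r s I : R) (n : nat) (x : nat -> R).
Hypothesis HF : is_cdf F.
Hypothesis Hr : 1 <= r.
Hypothesis Hs : 1 <= s.
Hypothesis Hsr : s <= r.
Hypothesis HG : Good r (qf F) I.
Hypothesis Hn : (4 <= n)%nat.
Hypothesis Hx : in_Xi n x.
Hypothesis Hmin : forall y, in_Xi n y -> forall Ix Iy,
  int01 (fvec F n x s) Ix -> int01 (fvec F n y s) Iy -> Ix <= Iy.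

Let q := qf F.

Lemma nR' : 4 <= INR n.
Proof. apply nR; auto. Qed.

Lemma qm i j : (1 <= i)%nat -> (i <= j)%nat -> (j < n)%nat -> q (INR i / INR n) <= q (INR j / INR n).
Proof.
  intros. apply qf_mono; auto. apply kn_pos; auto. apply INR_div_le; lia. apply kn_lt1; auto.
Qed.

Lemma zc_hi k : (k <= n - 2)%nat -> zc q n x k <= q (INR (S k) / INR n).
Proof.
  intros Hk. unfold zc. destruct (Nat.eqb_spec k 0) as [->|H0]; [apply Rmin_r|].
  destruct (Nat.eqb_spec k (n - 1)) as [H1|H1]; [lia|]. apply Rmin_r.
Qed.

Lemma zc_lo k : (1 <= k)%nat -> (k <= n - 1)%nat -> q (INR k / INR n) <= zc q n x k.
Proof.
  intros Hk1 Hk2. unfold zc. destruct (Nat.eqb_spec k 0) as [H0|H0]; [lia|].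
  destruct (Nat.eqb_spec k (n - 1)) as [->|H1]; [apply Rmax_r|].
  apply Rmin_glb; [apply Rmax_r|]. apply qm; lia.
Qed.

Lemma zc_sorted : in_Xi n (zc q n x).
Proof.
  intros i j Hij Hj. destruct (Nat.eq_dec i j) as [->|Hne]; [lra|].
  eapply Rle_trans; [apply zc_hi; lia|]. eapply Rle_trans; [|apply zc_lo; lia].
  apply qm; lia.
Qed.

Lemma zc_disj k t : (k < n)%nat -> INR k / INR n < t < INR (S k) / INR n ->
  zc q n x k = x k \/ (x k < zc q n x k /\ zc q n x k <= q t) \/
  (q t <= zc q n x k /\ zc q n x k < x k).
Proof.
  intros Hk Ht.
  assert (Hlo : (1 <= k)%nat -> q (INR k / INR n) <= q t).
  { intros. apply qf_mono; auto; [apply kn_pos; auto|lra|]. pose proof (kn_lt1 n Hn (S k)).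
    destruct (Nat.eq_dec (S k) n) as [He|He].
    - rewrite He in Ht. pose proof nR'. assert (INR n / INR n = 1) by (field; lra). lra.
    - pose proof (H0 ltac:(lia)). lra. }
  assert (Hhi : (S k < n)%nat -> q t <= q (INR (S k) / INR n)).
  { intros. apply qf_mono; auto; [|lra|apply kn_lt1; auto].
    destruct (Nat.eq_dec k 0) as [->|Hk0].
    - pose proof nR'. simpl in Ht. unfold Rdiv in Ht. rewrite Rmult_0_l in Ht. lra.
    - pose proof (kn_pos n Hn k ltac:(lia)). lra. }
  unfold zc. destruct (Nat.eqb_spec k 0) as [->|H0].
  - pose proof (Hhi ltac:(lia)). unfold Rmin. destruct (Rle_dec (x 0%nat) _); [left; auto|].
    right; right. lra.
  - destruct (Nat.eqb_spec k (n - 1)) as [->|H1].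
    + pose proof (Hlo ltac:(lia)). unfold Rmax. destruct (Rle_dec (x (n - 1)%nat) _).
      * destruct (Req_dec (x (n - 1)%nat) (q (INR (n - 1) / INR n))) as [He|He]; [left; auto|].
        right; left. lra.
      * left; auto.
    + pose proof (Hlo ltac:(lia)). pose proof (Hhi ltac:(lia)).
      unfold Rmax, Rmin. destruct (Rle_dec (x k) (q (INR k / INR n))).
      * destruct (Rle_dec (q (INR k / INR n)) (q (INR (S k) / INR n))); [|lra].
        destruct (Req_dec (x k) (q (INR k / INR n))) as [He|He]; [left; auto|].
        right; left. lra.
      * destruct (Rle_dec (x k) (q (INR (S k) / INR n))); [left; auto|].
        right; right. lra.
Qed.

Let w := / (2 * INR n).

Lemma w_facts : 0 < w <= 1/8 /\ INR 1 / INR n = 2 * w /\ INR (n - 1) / INR n = 1 - 2 * w.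
Proof.
  pose proof nR'. unfold w. split; [split; [apply Rinv_0_lt_compat; lra|]|]. 
  { replace (/ (2 * INR n)) with (1 / (2 * INR n)) by (field; lra). apply div_le; lra. }
  split.
  - simpl. field. lra.
  - rewrite minus_INR by lia. simpl. field. lra.
Qed.

Lemma cpt_mid a b k : 0 < a -> a <= INR 1 / INR n -> INR (n - 1) / INR n <= b ->
  (1 <= k)%nat -> (k <= n - 1)%nat -> cpt a b n k = INR k / INR n.
Proof.
  intros Ha Ha1 Hb Hk1 Hk2. unfold cpt.
  pose proof (INR_div_le n 1 k ltac:(lia) Hk1). pose proof (INR_div_le n k (n - 1) ltac:(lia) Hk2).
  rewrite Rmin_right by lra. apply Rmax_right. lra.
Qed.

Lemma width a b k : 0 < a -> a <= w -> 1 - w <= b -> b < 1 -> (k < n)%nat ->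
  w <= cpt a b n (S k) - cpt a b n k.
Proof.
  intros Ha Haw Hb Hb1 Hk. destruct w_facts as [Hw [H1 H2]].
  destruct (Nat.eq_dec k 0) as [->|Hk0].
  - rewrite cpt_0 by lra. rewrite cpt_mid by (lra || lia). lra.
  - destruct (Nat.eq_dec k (n - 1)) as [->|Hk1].
    + replace (S (n - 1)) with n by lia. rewrite cpt_n by (lia || lra).
      rewrite cpt_mid by (lra || lia). lra.
    + rewrite !cpt_mid by (lra || lia). rewrite (kn_step n Hn k).
      unfold w in *. pose proof nR'. assert (/ INR n = 2 * / (2 * INR n)) by (field; lra). lra.
Qed.

Let G k := rpow (Rabs (x k - zc q n x k)) s.

Lemma clamp_ineq a b : 0 < a -> a <= w -> 1 - w <= b -> b < 1 ->
  RInt (fvec F n (zc q n x) s) a b + w * sumk G n <= RInt (fvec F n x s) a b.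
Proof.
  intros Ha Haw Hb Hb1. destruct w_facts as [Hw [H1 H2]].
  assert (Hab : a <= b) by lra.
  assert (Hn1 : (1 <= n)%nat) by lia.
  destruct (fvec_decomp F n (zc q n x) s a b HF ltac:(lra) Hn1 zc_sorted Ha Hab Hb1) as [_ ->].
  destruct (fvec_decomp F n x s a b HF ltac:(lra) Hn1 Hx Ha Hab Hb1) as [_ ->].
  rewrite <- sumk_scal, <- sumk_plus. apply sumk_le. intros k Hk.
  pose proof (cpt_mono a b n k Hn1 Hab).
  pose proof (cpt_bounds a b n k Hab). pose proof (cpt_bounds a b n (S k) Hab).
  pose proof (width a b k Ha Haw Hb Hb1 Hk).
  set (c1 := cpt a b n k) in *. set (c2 := cpt a b n (S k)) in *.
  assert (HGk : 0 <= G k) by apply rpow_ge0.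
  assert (Hmq : Mono (qf F)) by (apply qf_Mono; auto).
  assert (E1 : ex_RInt (gk F (zc q n x) s k) c1 c2) by (apply ex_RInt_powdiff; auto; lra).
  assert (E2 : ex_RInt (gk F x s k) c1 c2) by (apply ex_RInt_powdiff; auto; lra).
  assert (RInt (fun t => gk F (zc q n x) s k t + G k) c1 c2 <= RInt (gk F x s k) c1 c2).
  { apply RInt_le; [lra|apply ex_RInt_plus_R; [exact E1|apply ex_RInt_const]|exact E2|].
    intros t Ht. unfold gk, G. apply gain; auto.
    apply zc_disj; auto. apply (cpt_in a b n k t Hn1 Hab). exact Ht. }
  rewrite RInt_plus_R in H5 by (auto; apply ex_RInt_const).
  rewrite RInt_const_R in H5.
  assert (w * G k <= (c2 - c1) * G k) by (apply Rmult_le_compat_r; lra).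
  lra.
Qed.

Lemma clamp_eq : forall k, (k < n)%nat -> x k = zc q n x k.
Proof.
  destruct w_facts as [[Hw0 Hw1] [H1 H2]].
  assert (Hn1 : (1 <= n)%nat) by lia.
  destruct (dist_exists F r s n x I HF Hs Hsr HG Hn1 Hx) as [Ix HIx].
  destruct (dist_exists F r s n (zc q n x) I HF Hs Hsr HG Hn1 zc_sorted) as [Iz HIz].
  pose proof (Hmin (zc q n x) zc_sorted Ix Iz HIx HIz) as Hle.
  assert (Hz : Iz <= Ix - w * sumk G n).
  { apply (int01_le _ Iz _ HIz). intros a' b' Ha' Hab' Hb' _.
    set (a := Rmin a' w). set (b := Rmax b' (1 - w)).
    assert (Ha : 0 < a) by (unfold a; apply Rmin_glb_lt; lra).
    pose proof (Rmin_l a' w). pose proof (Rmin_r a' w).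
    pose proof (Rmax_l b' (1 - w)). pose proof (Rmax_r b' (1 - w)).
    assert (Hb : b < 1) by (unfold b; apply Rmax_lub_lt; lra).
    fold a b in H, H0, H3, H4.
    assert (E1 : RInt (fvec F n (zc q n x) s) a' b' <= RInt (fvec F n (zc q n x) s) a b).
    { apply RInt_mono_int; try lra. apply fvec_ex; auto; try lra. apply zc_sorted.
      intros; apply fvec_nonneg. }
    pose proof (clamp_ineq a b Ha H0 H4 Hb).
    assert (RInt (fvec F n x s) a b <= Ix).
    { apply int01_ge; auto; try lra. apply fvec_ex; auto; lra. }
    lra. }
  assert (HS : sumk G n <= 0).
  { assert (w * sumk G n <= 0) by lra.
    destruct (Rle_lt_dec (sumk G n) 0); auto. nra. }
  intros k Hk.
  pose proof (sumk_zero G n (fun _ _ => rpow_ge0 _ _) HS k Hk) as HGk.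
  unfold G in HGk. destruct (Req_dec (x k) (zc q n x k)) as [He|He]; auto. exfalso.
  assert (0 < Rabs (x k - zc q n x k)) by (apply Rabs_pos_lt; lra).
  pose proof (rpow_pos _ s H). lra.
Qed.

Lemma P1 k : (1 <= k)%nat -> (k <= n - 2)%nat -> q (INR k / INR n) <= x k <= q (INR (S k) / INR n).
Proof.
  intros. rewrite (clamp_eq k) by lia. split; [apply zc_lo; lia|apply zc_hi; lia].
Qed.

Lemma P2 : x 0%nat <= q (INR 1 / INR n).
Proof. rewrite (clamp_eq 0) by lia. apply zc_hi. lia. Qed.

Lemma P3 : q (INR (n - 1) / INR n) <= x (n - 1)%nat.
Proof. rewrite (clamp_eq (n - 1)) by lia. apply zc_lo; lia. Qed.

End Part1.

Lemma KR D hh s r BR : 0 < D -> 0 < hh -> 1 <= s -> s <= r -> 0 <= BR ->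
  (forall K, 0 < K -> hh / 2 * rpow D s <= 2 * hh * rpow K s + rpow K (s - r) * BR) ->
  hh * rpow D r <= 4 * rpow 8 r * BR.
Proof.
  intros HD Hh Hs Hsr HBR H.
  specialize (H (D / 8) ltac:(lra)).
  rewrite !rpow_E in * by lra.
  assert (E1 : Rpower (D / 8) s = Rpower D s * Rpower (/ 8) s).
  { unfold Rdiv. rewrite Rpower_mult_distr; auto; lra. }
  assert (E2 : Rpower (/ 8) s <= / 8).
  { unfold Rpower. rewrite <- (exp_ln (/ 8)) at 2 by lra.
    assert (ln (/ 8) < 0) by (rewrite <- ln_1; apply ln_increasing; lra).
    destruct (Req_dec s 1) as [->|Hs1]; [rewrite Rmult_1_l; lra|].
    left. apply exp_increasing. nra. }
  assert (E3 : Rpower (D / 8) (s - r) = Rpower D (s - r) * Rpower 8 (r - s)).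
  { unfold Rdiv. rewrite <- Rpower_mult_distr by lra. f_equal.
    unfold Rpower. rewrite ln_Rinv by lra. f_equal. ring. }
  assert (E4 : Rpower 8 (r - s) <= Rpower 8 r) by (apply Rle_Rpower; lra).
  assert (E5 : Rpower D s * Rpower D (r - s) = Rpower D r).
  { rewrite <- Rpower_plus. f_equal. ring. }
  assert (E6 : Rpower D (s - r) * Rpower D (r - s) = 1).
  { rewrite <- Rpower_plus. replace (s - r + (r - s)) with 0 by ring. apply Rpower_O. lra. }
  assert (P1 : 0 < Rpower D s) by (unfold Rpower; apply exp_pos).
  assert (P2 : 0 < Rpower D (r - s)) by (unfold Rpower; apply exp_pos).
  assert (P3 : 0 < Rpower D (s - r)) by (unfold Rpower; apply exp_pos).
  assert (P4 : 0 < Rpower (/ 8) s) by (unfold Rpower; apply exp_pos).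
  assert (P5 : 0 < Rpower 8 (r - s)) by (unfold Rpower; apply exp_pos).
  rewrite E1, E3 in H.
  (* hh/2 * Ds <= 2 hh Ds /8 + D(s-r) 8^(r-s) BR  => hh Ds / 4 <= D(s-r) 8^(r-s) BR *)
  assert (H1 : hh / 4 * Rpower D s <= Rpower D (s - r) * Rpower 8 (r - s) * BR).
  { assert (2 * hh * (Rpower D s * Rpower (/ 8) s) <= 2 * hh * (Rpower D s * / 8)).
    { apply Rmult_le_compat_l; [lra|]. apply Rmult_le_compat_l; lra. }
    lra. }
  assert (H2 : hh / 4 * Rpower D s * Rpower D (r - s) <=
               Rpower D (s - r) * Rpower 8 (r - s) * BR * Rpower D (r - s))
    by (apply Rmult_le_compat_r; lra).
  replace (hh / 4 * Rpower D s * Rpower D (r - s)) with (hh / 4 * Rpower D r) in H2 by (rewrite <- E5; ring).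
  replace (Rpower D (s - r) * Rpower 8 (r - s) * BR * Rpower D (r - s)) with
    (Rpower 8 (r - s) * BR) in H2 by (rewrite <- (Rmult_1_l (Rpower 8 (r - s) * BR)), <- E6; ring).
  assert (Rpower 8 (r - s) * BR <= Rpower 8 r * BR) by (apply Rmult_le_compat_r; lra).
  lra.
Qed.

Lemma end_K phi c s r K u v : Mono phi -> 0 < s -> s <= r -> 0 < K -> 0 < u -> u <= v -> v < 1 ->
  RInt (fun t => rpow (Rabs (c - phi t)) s) u v <=
  (v - u) * rpow K s + rpow K (s - r) * RInt (fun t => rpow (Rabs (c - phi t)) r) u v.
Proof.
  intros Hm Hs Hsr HK Hu Huv Hv.
  assert (E : ex_RInt (fun t => rpow (Rabs (c - phi t)) r) u v) by (apply ex_RInt_powdiff; auto; lra).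
  eapply Rle_trans.
  - apply RInt_le with (g := fun t => rpow K s + rpow K (s - r) * rpow (Rabs (c - phi t)) r); auto.
    + apply ex_RInt_powdiff; auto; lra.
    + apply ex_RInt_plus_R; [apply ex_RInt_const|apply ex_RInt_scal_R; auto].
    + intros t Ht. apply rpow_Ktrick; auto. apply Rabs_pos.
  - rewrite RInt_plus_R by (try apply ex_RInt_const; apply ex_RInt_scal_R; auto).
    rewrite RInt_const_R, RInt_scal_R by auto. lra.
Qed.

Section Ends.
Variables (F : R -> R) (r s I : R) (n : nat) (x : nat -> R) (tauL tauR : R).
Hypothesis HF : is_cdf F.
Hypothesis Hr : 1 <= r.
Hypothesis Hs : 1 <= s.
Hypothesis Hsr : s <= r.
Hypothesis HG : Good r (qf F) I.
Hypothesis Hn : (4 <= n)%nat.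
Hypothesis Hx : in_Xi n x.
Hypothesis Hmin : forall y, in_Xi n y -> forall Ix Iy,
  int01 (fvec F n x s) Ix -> int01 (fvec F n y s) Iy -> Ix <= Iy.
Hypothesis HtauL : forall a, 0 < a -> a <= INR 1 / INR n ->
  RInt (fun t => rpow (Rabs (qf F t)) r) a (INR 1 / INR n) <= tauL.
Hypothesis HtauR : forall b, INR (n - 1) / INR n <= b -> b < 1 ->
  RInt (fun t => rpow (Rabs (qf F t)) r) (INR (n - 1) / INR n) b <= tauR.

Let q := qf F.
Let h1 := INR 1 / INR n.
Let h2 := INR (n - 1) / INR n.
Let cL := q h1.
Let cR := q h2.

Lemma hfacts : 0 < h1 <= 1/4 /\ h2 = 1 - h1 /\ h1 = / INR n.
Proof.
  pose proof (nR n Hn). unfold h1, h2. split; [split|split].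
  - apply Rdiv_lt_0_compat; simpl; lra.
  - apply div_le; simpl; lra.
  - rewrite minus_INR by lia. simpl. field. lra.
  - simpl. field. lra.
Qed.

Lemma Mq : Mono q.
Proof. apply qf_Mono; auto. Qed.

Lemma P1' k : (1 <= k)%nat -> (k <= n - 2)%nat -> q (INR k / INR n) <= x k <= q (INR (S k) / INR n).
Proof. apply (P1 F r s I n x HF Hs Hsr HG Hn Hx Hmin). Qed.

Lemma qm' i j : (1 <= i)%nat -> (i <= j)%nat -> (j < n)%nat -> q (INR i / INR n) <= q (INR j / INR n).
Proof.
  intros. apply qf_mono; auto. apply kn_pos; auto. apply INR_div_le; lia. apply kn_lt1; auto.
Qed.

Lemma z2_0 : z2 q n x 0 = cL.
Proof. reflexivity. Qed.

Lemma z2_last : z2 q n x (n - 1) = cR.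
Proof.
  unfold z2. destruct (Nat.eqb_spec (n - 1) 0); [lia|]. rewrite Nat.eqb_refl. reflexivity.
Qed.

Lemma z2_mid k : (1 <= k)%nat -> (k <= n - 2)%nat -> z2 q n x k = x k.
Proof.
  intros. unfold z2. destruct (Nat.eqb_spec k 0); [lia|].
  destruct (Nat.eqb_spec k (n - 1)); [lia|]. reflexivity.
Qed.

Lemma z2_sorted : in_Xi n (z2 q n x).
Proof.
  assert (Hhi : forall k, (k <= n - 2)%nat -> z2 q n x k <= q (INR (S k) / INR n)).
  { intros k Hk. destruct (Nat.eq_dec k 0) as [->|Hk0].
    - rewrite z2_0. unfold cL, h1. lra.
    - rewrite z2_mid by lia. apply P1'; lia. }
  assert (Hlo : forall k, (1 <= k)%nat -> (k <= n - 1)%nat -> q (INR k / INR n) <= z2 q n x k).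
  { intros k Hk1 Hk2. destruct (Nat.eq_dec k (n - 1)) as [->|Hk].
    - rewrite z2_last. unfold cR, h2. lra.
    - rewrite z2_mid by lia. apply P1'; lia. }
  intros i j Hij Hj. destruct (Nat.eq_dec i j) as [->|Hne]; [lra|].
  eapply Rle_trans; [apply Hhi; lia|]. eapply Rle_trans; [|apply Hlo; lia].
  apply qm'; lia.
Qed.

Lemma split_ends y p a b : in_Xi n y -> 0 <= p -> 0 < a -> a <= h1 -> h2 <= b -> b < 1 ->
  RInt (fvec F n y p) a b = RInt (gk F y p 0) a h1 + RInt (fvec F n y p) h1 h2 +
                             RInt (gk F y p (n - 1)) h2 b.
Proof.
  intros Hy Hp Ha Ha1 Hb2 Hb. destruct hfacts as [[Hh1 Hh1'] [Hh2 Hh3]].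
  assert (Hn1 : (1 <= n)%nat) by lia.
  assert (Ex : forall u v, 0 < u -> u <= v -> v < 1 -> ex_RInt (fvec F n y p) u v).
  { intros. apply fvec_ex; auto. }
  rewrite <- (RInt_Chasles_R _ a h1 b) by (apply Ex; lra).
  rewrite <- (RInt_Chasles_R _ h1 h2 b) by (apply Ex; lra).
  assert (HL : RInt (fvec F n y p) a h1 = RInt (gk F y p 0) a h1).
  { apply RInt_ext. intros t Ht. rewrite Rmin_left, Rmax_right in Ht by lra.
    unfold fvec, gk. rewrite (qf_emp n y 0 t); [reflexivity|lia|exact Hy|lia|].
    split; [simpl; unfold Rdiv; rewrite Rmult_0_l; lra|]. unfold h1 in Ht. lra. }
  assert (HR : RInt (fvec F n y p) h2 b = RInt (gk F y p (n - 1)) h2 b).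
  { apply RInt_ext. intros t Ht. rewrite Rmin_left, Rmax_right in Ht by lra.
    unfold fvec, gk. rewrite (qf_emp n y (n - 1) t); [reflexivity|lia|exact Hy|lia|].
    replace (S (n - 1)) with n by lia. pose proof (nR n Hn).
    assert (INR n / INR n = 1) by (field; lra). unfold h2 in Ht. lra. }
  rewrite HL, HR. lra.
Qed.

Lemma mid_eq : RInt (fvec F n x s) h1 h2 = RInt (fvec F n (z2 q n x) s) h1 h2.
Proof.
  destruct hfacts as [[Hh1 Hh1'] [Hh2 Hh3]].
  apply RInt_ext. intros t Ht. rewrite Rmin_left, Rmax_right in Ht by lra.
  destruct (piece_exists n t ltac:(lia) ltac:(lra)) as [k [Hk Hkt]].
  assert (Hk1 : (1 <= k)%nat).
  { destruct (Nat.eq_dec k 0) as [->|]; [|lia]. unfold h1 in Ht. lra. }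
  assert (Hk2 : (k <= n - 2)%nat).
  { destruct (Nat.eq_dec k (n - 1)) as [->|]; [|lia]. unfold h2 in Ht. lra. }
  unfold fvec. rewrite (qf_emp n x k t), (qf_emp n (z2 q n x) k t); auto; try lia.
  - rewrite z2_mid; auto.
  - apply z2_sorted.
Qed.

Lemma ends_compare BZ :
  (forall a' b', 0 < a' -> a' <= h1 -> h2 <= b' -> b' < 1 ->
     RInt (gk F (z2 q n x) s 0) a' h1 + RInt (gk F (z2 q n x) s (n - 1)) h2 b' <= BZ) ->
  forall a b, 0 < a -> a <= h1 -> h2 <= b -> b < 1 ->
     RInt (gk F x s 0) a h1 + RInt (gk F x s (n - 1)) h2 b <= BZ.
Proof.
  intros HBZ a b Ha Ha1 Hb2 Hb. destruct hfacts as [[Hh1 Hh1'] [Hh2 Hh3]].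
  assert (Hn1 : (1 <= n)%nat) by lia.
  destruct (dist_exists F r s n x I HF Hs Hsr HG Hn1 Hx) as [Ix HIx].
  destruct (dist_exists F r s n (z2 q n x) I HF Hs Hsr HG Hn1 z2_sorted) as [Iz HIz].
  pose proof (Hmin (z2 q n x) z2_sorted Ix Iz HIx HIz) as Hle.
  set (Mid := RInt (fvec F n x s) h1 h2).
  assert (Hz : Iz <= BZ + Mid).
  { apply (int01_le _ Iz _ HIz). intros a' b' Ha' Hab' Hb' _.
    set (a2 := Rmin a' h1). set (b2 := Rmax b' h2).
    assert (Ha2 : 0 < a2) by (unfold a2; apply Rmin_glb_lt; lra).
    pose proof (Rmin_l a' h1). pose proof (Rmin_r a' h1).
    pose proof (Rmax_l b' h2). pose proof (Rmax_r b' h2).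
    assert (Hb2' : b2 < 1) by (unfold b2; apply Rmax_lub_lt; lra).
    fold a2 b2 in H, H0, H1, H2.
    assert (E1 : RInt (fvec F n (z2 q n x) s) a' b' <= RInt (fvec F n (z2 q n x) s) a2 b2).
    { apply RInt_mono_int; try lra. apply fvec_ex; auto; try lra. apply z2_sorted.
      intros; apply fvec_nonneg. }
    rewrite (split_ends (z2 q n x) s a2 b2 z2_sorted ltac:(lra) Ha2 H0 H2 Hb2') in E1.
    rewrite <- mid_eq in E1. fold Mid in E1.
    pose proof (HBZ a2 b2 Ha2 H0 H2 Hb2'). lra. }
  assert (Hx2 : RInt (fvec F n x s) a b <= Ix).
  { apply int01_ge; auto; try lra. apply fvec_ex; auto; lra. }
  rewrite (split_ends x s a b Hx ltac:(lra) Ha Ha1 Hb2 Hb) in Hx2. fold Mid in Hx2.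
  lra.
Qed.


Lemma P2' : x 0%nat <= cL.
Proof. apply (P2 F r s I n x HF Hs Hsr HG Hn Hx Hmin). Qed.

Lemma P3' : cR <= x (n - 1)%nat.
Proof. apply (P3 F r s I n x HF Hs Hsr HG Hn Hx Hmin). Qed.

Let BRL := rpow 2 r * (h1 * rpow (Rabs cL) r + tauL).
Let BRR := rpow 2 r * (h1 * rpow (Rabs cR) r + tauR).
Let BR := BRL + BRR.
Let mL := q (h1 / 2).
Let mR := q (1 - h1 / 2).

Lemma tau_nonneg : 0 <= tauL /\ 0 <= tauR.
Proof.
  destruct hfacts as [[Hh1 Hh1'] [Hh2 Hh3]]. split.
  - pose proof (HtauL h1 Hh1 ltac:(unfold h1; lra)). rewrite RInt_point_R in H. exact H.
  - pose proof (HtauR h2 ltac:(unfold h2; lra) ltac:(lra)). rewrite RInt_point_R in H. exact H.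
Qed.

Lemma BR_nonneg : 0 <= BRL /\ 0 <= BRR.
Proof.
  destruct tau_nonneg. destruct hfacts as [[Hh1 _] _].
  pose proof (rpow_ge0 2 r). pose proof (rpow_ge0 (Rabs cL) r). pose proof (rpow_ge0 (Rabs cR) r).
  unfold BRL, BRR. split; apply Rmult_le_pos; nra.
Qed.

Lemma BRL_bound a' : 0 < a' -> a' <= h1 ->
  RInt (fun t => rpow (Rabs (cL - q t)) r) a' h1 <= BRL.
Proof.
  intros. destruct hfacts as [[Hh1 Hh1'] [Hh2 Hh3]].
  eapply Rle_trans; [apply end_simple; auto; try lra; apply Mq|].
  unfold BRL. apply Rmult_le_compat_l; [apply rpow_ge0|].
  pose proof (HtauL a' H ltac:(unfold h1 in *; lra)). fold h1 in H1.
  pose proof (rpow_ge0 (Rabs cL) r).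
  assert ((h1 - a') * rpow (Rabs cL) r <= h1 * rpow (Rabs cL) r) by (apply Rmult_le_compat_r; lra).
  unfold q. lra.
Qed.

Lemma BRR_bound b' : h2 <= b' -> b' < 1 ->
  RInt (fun t => rpow (Rabs (cR - q t)) r) h2 b' <= BRR.
Proof.
  intros. destruct hfacts as [[Hh1 Hh1'] [Hh2 Hh3]].
  eapply Rle_trans; [apply end_simple; auto; try lra; apply Mq|].
  unfold BRR. apply Rmult_le_compat_l; [apply rpow_ge0|].
  pose proof (HtauR b' ltac:(unfold h2 in *; lra) H0). fold h2 in H1.
  pose proof (rpow_ge0 (Rabs cR) r).
  assert ((b' - h2) * rpow (Rabs cR) r <= h1 * rpow (Rabs cR) r) by (apply Rmult_le_compat_r; lra).
  unfold q. lra.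
Qed.

Lemma ends_s K : 0 < K -> forall a b, 0 < a -> a <= h1 -> h2 <= b -> b < 1 ->
  RInt (gk F x s 0) a h1 + RInt (gk F x s (n - 1)) h2 b <=
  2 * h1 * rpow K s + rpow K (s - r) * BR.
Proof.
  intros HK. apply ends_compare. intros a' b' Ha' Ha1 Hb2 Hb.
  destruct hfacts as [[Hh1 Hh1'] [Hh2 Hh3]].
  assert (E1 : RInt (gk F (z2 q n x) s 0) a' h1 <= h1 * rpow K s + rpow K (s - r) * BRL).
  { unfold gk. rewrite z2_0.
    eapply Rle_trans; [apply (end_K q cL s r K a' h1); auto; try lra; apply Mq|].
    pose proof (BRL_bound a' Ha' Ha1). pose proof (rpow_ge0 K s). pose proof (rpow_ge0 K (s - r)).
    assert ((h1 - a') * rpow K s <= h1 * rpow K s) by (apply Rmult_le_compat_r; lra).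
    assert (rpow K (s - r) * RInt (fun t => rpow (Rabs (cL - q t)) r) a' h1 <= rpow K (s - r) * BRL)
      by (apply Rmult_le_compat_l; lra).
    lra. }
  assert (E2 : RInt (gk F (z2 q n x) s (n - 1)) h2 b' <= h1 * rpow K s + rpow K (s - r) * BRR).
  { unfold gk. rewrite z2_last.
    eapply Rle_trans; [apply (end_K q cR s r K h2 b'); auto; try lra; apply Mq|].
    pose proof (BRR_bound b' Hb2 Hb). pose proof (rpow_ge0 K s). pose proof (rpow_ge0 K (s - r)).
    assert ((b' - h2) * rpow K s <= h1 * rpow K s) by (apply Rmult_le_compat_r; lra).
    assert (rpow K (s - r) * RInt (fun t => rpow (Rabs (cR - q t)) r) h2 b' <= rpow K (s - r) * BRR)
      by (apply Rmult_le_compat_l; lra).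
    lra. }
  unfold BR. lra.
Qed.

Lemma DL_bound : h1 * rpow (Rmax 0 (mL - x 0%nat)) r <= 4 * rpow 8 r * BR.
Proof.
  destruct hfacts as [[Hh1 Hh1'] [Hh2 Hh3]]. destruct BR_nonneg.
  pose proof (rpow_ge0 8 r).
  unfold Rmax. destruct (Rle_dec 0 (mL - x 0%nat)) as [Hd|Hd].
  - destruct (Req_dec (mL - x 0%nat) 0) as [He|He].
    { rewrite He, rpow_0. unfold BR. nra. }
    apply (KR _ h1 s r BR); auto; try lra. { unfold BR; lra. }
    intros K HK. pose proof (ends_s K HK (h1 / 2) h2 ltac:(lra) ltac:(lra) ltac:(lra) ltac:(lra)).
    rewrite RInt_point_R in H2.
    assert ((h1 - h1 / 2) * rpow (mL - x 0%nat) s <= RInt (gk F x s 0) (h1 / 2) h1).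
    { apply RInt_ge_const; [lra|apply ex_RInt_powdiff; auto; try lra; apply Mq|].
      intros t Ht. unfold gk. apply rpow_le; [lra|]. split; [lra|].
      assert (mL <= q t) by (apply Mq; lra). fold q. rewrite Rabs_left1 by lra. lra. }
    lra.
  - rewrite rpow_0. unfold BR. nra.
Qed.

Lemma DR_bound : h1 * rpow (Rmax 0 (x (n - 1)%nat - mR)) r <= 4 * rpow 8 r * BR.
Proof.
  destruct hfacts as [[Hh1 Hh1'] [Hh2 Hh3]]. destruct BR_nonneg.
  pose proof (rpow_ge0 8 r).
  unfold Rmax. destruct (Rle_dec 0 (x (n - 1)%nat - mR)) as [Hd|Hd].
  - destruct (Req_dec (x (n - 1)%nat - mR) 0) as [He|He].
    { rewrite He, rpow_0. unfold BR. nra. }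
    apply (KR _ h1 s r BR); auto; try lra. { unfold BR; lra. }
    intros K HK. pose proof (ends_s K HK h1 (1 - h1 / 2) ltac:(lra) ltac:(lra) ltac:(lra) ltac:(lra)).
    rewrite RInt_point_R in H2.
    assert ((h1 / 2) * rpow (x (n - 1)%nat - mR) s <= RInt (gk F x s (n - 1)) h2 (1 - h1 / 2)).
    { replace (h1 / 2) with ((1 - h1 / 2) - h2) at 1 by lra. apply RInt_ge_const; [lra|apply ex_RInt_powdiff; auto; try lra; apply Mq|].
      intros t Ht. unfold gk. apply rpow_le; [lra|]. split; [lra|].
      assert (q t <= mR) by (apply Mq; lra). fold q. rewrite Rabs_right by lra. lra. }
    lra.
  - rewrite rpow_0. unfold BR. nra.
Qed.

Lemma EL_final u v : 0 < u -> u <= v -> v <= h1 ->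
  RInt (gk F x r 0) u v <=
  rpow 3 r * (h1 * rpow (cL - mL) r + 4 * rpow 8 r * BR + BRL).
Proof.
  intros Hu Huv Hv. destruct hfacts as [[Hh1 Hh1'] [Hh2 Hh3]].
  assert (Hex : ex_RInt (gk F x r 0) u h1) by (apply ex_RInt_powdiff; auto; try lra; apply Mq).
  eapply Rle_trans; [apply RInt_mono_int with (a := u) (b := h1); auto; try lra; intros; apply rpow_ge0|].
  set (DL := Rmax 0 (mL - x 0%nat)).
  assert (HDL : 0 <= DL) by apply Rmax_l.
  assert (HDL2 : mL - x 0%nat <= DL) by apply Rmax_r.
  assert (HmL : mL <= cL) by (apply Mq; lra).
  pose proof P2'.
  assert (Ec : ex_RInt (fun t => rpow (Rabs (cL - q t)) r) u h1) by (apply ex_RInt_powdiff; auto; try lra; apply Mq).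
  eapply Rle_trans.
  - apply RInt_le with (g := fun t => rpow 3 r * (rpow (cL - mL) r + rpow DL r) +
                                     rpow 3 r * rpow (Rabs (cL - q t)) r); auto; try lra.
    + apply ex_RInt_plus_R; [apply ex_RInt_const|apply ex_RInt_scal_R; auto].
    + intros t Ht. unfold gk.
      assert (rpow (Rabs (x 0%nat - qf F t)) r <= rpow ((cL - mL) + DL + Rabs (cL - q t)) r).
      { apply rpow_le; [lra|]. split; [apply Rabs_pos|].
        pose proof (Rabs_triang (x 0%nat - cL) (cL - q t)).
        replace (x 0%nat - cL + (cL - q t)) with (x 0%nat - qf F t) in H0 by (unfold q; ring).
        rewrite (Rabs_left1 (x 0%nat - cL)) in H0 by lra. lra. }
      pose proof (rpow_three_sum (cL - mL) DL (Rabs (cL - q t)) r ltac:(lra) ltac:(lra) HDL (Rabs_pos _)).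
      lra.
  - rewrite RInt_plus_R by (try apply ex_RInt_const; apply ex_RInt_scal_R; auto).
    rewrite RInt_const_R, RInt_scal_R by auto.
    pose proof (BRL_bound u Hu ltac:(lra)). pose proof DL_bound. fold DL in H1.
    pose proof (rpow_ge0 3 r). pose proof (rpow_ge0 (cL - mL) r). pose proof (rpow_ge0 DL r).
    assert ((h1 - u) * (rpow 3 r * (rpow (cL - mL) r + rpow DL r)) <=
            rpow 3 r * (h1 * rpow (cL - mL) r + h1 * rpow DL r)).
    { replace (rpow 3 r * (h1 * rpow (cL - mL) r + h1 * rpow DL r)) with
        (h1 * (rpow 3 r * (rpow (cL - mL) r + rpow DL r))) by ring.
      apply Rmult_le_compat_r; [|lra]. apply Rmult_le_pos; lra. }
    assert (rpow 3 r * RInt (fun t => rpow (Rabs (cL - q t)) r) u h1 <= rpow 3 r * BRL)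
      by (apply Rmult_le_compat_l; lra).
    assert (rpow 3 r * (h1 * rpow DL r) <= rpow 3 r * (4 * rpow 8 r * BR))
      by (apply Rmult_le_compat_l; lra).
    nra.
Qed.

Lemma ER_final u v : h2 <= u -> u <= v -> v < 1 ->
  RInt (gk F x r (n - 1)) u v <=
  rpow 3 r * (h1 * rpow (mR - cR) r + 4 * rpow 8 r * BR + BRR).
Proof.
  intros Hu Huv Hv. destruct hfacts as [[Hh1 Hh1'] [Hh2 Hh3]].
  assert (Hex : ex_RInt (gk F x r (n - 1)) h2 v) by (apply ex_RInt_powdiff; auto; try lra; apply Mq).
  eapply Rle_trans; [apply RInt_mono_int with (a := h2) (b := v); auto; try lra; intros; apply rpow_ge0|].
  set (DR := Rmax 0 (x (n - 1)%nat - mR)).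
  assert (HDR : 0 <= DR) by apply Rmax_l.
  assert (HDR2 : x (n - 1)%nat - mR <= DR) by apply Rmax_r.
  assert (HmR : cR <= mR) by (apply Mq; lra).
  pose proof P3'.
  assert (Ec : ex_RInt (fun t => rpow (Rabs (cR - q t)) r) h2 v) by (apply ex_RInt_powdiff; auto; try lra; apply Mq).
  eapply Rle_trans.
  - apply RInt_le with (g := fun t => rpow 3 r * (rpow (mR - cR) r + rpow DR r) +
                                     rpow 3 r * rpow (Rabs (cR - q t)) r); auto; try lra.
    + apply ex_RInt_plus_R; [apply ex_RInt_const|apply ex_RInt_scal_R; auto].
    + intros t Ht. unfold gk.
      assert (rpow (Rabs (x (n - 1)%nat - qf F t)) r <= rpow ((mR - cR) + DR + Rabs (cR - q t)) r).
      { apply rpow_le; [lra|]. split; [apply Rabs_pos|].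
        pose proof (Rabs_triang (x (n - 1)%nat - cR) (cR - q t)).
        replace (x (n - 1)%nat - cR + (cR - q t)) with (x (n - 1)%nat - qf F t) in H0 by (unfold q; ring).
        rewrite (Rabs_right (x (n - 1)%nat - cR)) in H0 by lra. lra. }
      pose proof (rpow_three_sum (mR - cR) DR (Rabs (cR - q t)) r ltac:(lra) ltac:(lra) HDR (Rabs_pos _)).
      lra.
  - rewrite RInt_plus_R by (try apply ex_RInt_const; apply ex_RInt_scal_R; auto).
    rewrite RInt_const_R, RInt_scal_R by auto.
    pose proof (BRR_bound v ltac:(lra) Hv). pose proof DR_bound. fold DR in H1.
    pose proof (rpow_ge0 3 r). pose proof (rpow_ge0 (mR - cR) r). pose proof (rpow_ge0 DR r).
    assert ((v - h2) * (rpow 3 r * (rpow (mR - cR) r + rpow DR r)) <=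
            rpow 3 r * (h1 * rpow (mR - cR) r + h1 * rpow DR r)).
    { replace (rpow 3 r * (h1 * rpow (mR - cR) r + h1 * rpow DR r)) with
        (h1 * (rpow 3 r * (rpow (mR - cR) r + rpow DR r))) by ring.
      apply Rmult_le_compat_r; [|lra]. apply Rmult_le_pos; lra. }
    assert (rpow 3 r * RInt (fun t => rpow (Rabs (cR - q t)) r) h2 v <= rpow 3 r * BRR)
      by (apply Rmult_le_compat_l; lra).
    assert (rpow 3 r * (h1 * rpow DR r) <= rpow 3 r * (4 * rpow 8 r * BR))
      by (apply Rmult_le_compat_l; lra).
    nra.
Qed.

End Ends.

Lemma rpow_diff_le a b r : 0 <= r -> rpow (a - b) r <= rpow 2 r * (rpow (Rabs a) r + rpow (Rabs b) r).
Proof.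
  intros Hr. pose proof (rpow_ge0 2 r). pose proof (rpow_ge0 (Rabs a) r). pose proof (rpow_ge0 (Rabs b) r).
  destruct (Rle_lt_dec (a - b) 0).
  - rewrite rpow_nonpos by lra. nra.
  - eapply Rle_trans; [|apply rpow_two_sum; auto; apply Rabs_pos].
    apply rpow_le; auto. split; [lra|].
    pose proof (Rle_abs a). pose proof (Rle_abs (- b)). rewrite Rabs_Ropp in H3. lra.
Qed.

Lemma combo c2 c3 c8 A P1 P2 BRL BR eta :
  0 <= c2 -> 0 <= c3 -> 0 <= c8 -> 0 <= eta ->
  A <= c2 * (P1 + P2) -> P1 <= eta -> P2 <= eta -> BRL <= c2 * (2 * eta) -> BR <= c2 * (4 * eta) ->
  c3 * (A + 4 * c8 * BR + BRL) <= c3 * c2 * (4 + 16 * c8) * eta.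
Proof.
  intros. 
  assert (A <= c2 * (2 * eta)) by (eapply Rle_trans; [exact H3|]; apply Rmult_le_compat_l; lra).
  assert (4 * c8 * BR <= 4 * c8 * (c2 * (4 * eta))) by (apply Rmult_le_compat_l; lra).
  assert (A + 4 * c8 * BR + BRL <= c2 * (4 + 16 * c8) * eta).
  { replace (c2 * (4 + 16 * c8) * eta) with (c2 * (2 * eta) + 4 * c8 * (c2 * (4 * eta)) + c2 * (2 * eta)) by ring.
    lra. }
  replace (c3 * c2 * (4 + 16 * c8) * eta) with (c3 * (c2 * (4 + 16 * c8) * eta)) by ring.
  apply Rmult_le_compat_l; lra.
Qed.

Lemma part1 F r s (x : nat -> nat -> R) :
  1 <= r -> is_cdf F -> in_Pr r F -> 1 <= s -> s <= r ->
  (forall n, (1 <= n)%nat ->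
     in_Xi n (x n) /\
     forall (y : nat -> R) (D1 D2 : R), in_Xi n y ->
       dist_r s (emp_cdf n (x n)) F D1 ->
       dist_r s (emp_cdf n y) F D2 -> D1 <= D2) ->
  exists D : nat -> R,
     (forall n, (1 <= n)%nat -> dist_r r (emp_cdf n (x n)) F (D n)) /\
     Un_cv D 0.
Proof.
  intros Hr HF HP Hs Hsr Hx.
  destruct (good_q F r ltac:(lra) HF HP) as [I HG].
  assert (Hm := qf_Mono F HF).
  assert (Hsort : forall n, (1 <= n)%nat -> in_Xi n (x n)) by (intros; apply Hx; auto).
  assert (Hmin : forall n, (1 <= n)%nat -> forall y, in_Xi n y -> forall Ix Iy,
             int01 (fvec F n (x n) s) Ix -> int01 (fvec F n y s) Iy -> Ix <= Iy).
  { intros n Hn y Hy Ix Iy HIx HIy.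
    assert (Hex : forall z, in_Xi n z -> forall a b, 0 < a -> a <= b -> b < 1 -> ex_RInt (fvec F n z s) a b).
    { intros. apply fvec_ex; auto; lra. }
    pose proof (int01_nonneg _ Ix HIx (Hex _ (Hsort n Hn)) (fun t _ => fvec_nonneg F n (x n) s t)).
    pose proof (int01_nonneg _ Iy HIy (Hex _ Hy) (fun t _ => fvec_nonneg F n y s t)).
    destruct (Hx n Hn) as [_ Hmn].
    assert (rpow Ix (/ s) <= rpow Iy (/ s)).
    { apply (Hmn y); auto.
      - exists Ix. split; [exact HIx|reflexivity].
      - exists Iy. split; [exact HIy|reflexivity]. }
    apply (rpow_le_inv _ _ (/ s)); auto. apply Rinv_0_lt_compat; lra. }
  destruct (conv_wrap (fun n => fvec F n (x n) r) r ltac:(lra)) as [D [HD1 HD2]].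
  - intros n Hn a b Ha Hab Hb. apply fvec_ex; auto; lra.
  - intros n Hn. apply (fvec_bound F r r n (x n) I); auto; lra.
  - intros; apply fvec_nonneg.
  - apply (asym F r I x HF Hr HG).
    + intros n Hn. apply Hsort. lia.
    + intros n k Hn Hk1 Hk2. apply (P1 F r s I n (x n) HF Hs Hsr HG Hn (Hsort n ltac:(lia)) (Hmin n ltac:(lia))); auto.
    + intros e He.
      set (c2 := rpow 2 r). set (c3 := rpow 3 r). set (c8 := rpow 8 r).
      assert (Hc2 : 0 <= c2) by apply rpow_ge0. assert (Hc3 : 0 <= c3) by apply rpow_ge0.
      assert (Hc8 : 0 <= c8) by apply rpow_ge0.
      set (C := c3 * c2 * (4 + 16 * c8) + 1).
      assert (HC : 1 <= C) by (unfold C; assert (0 <= c3 * c2 * (4 + 16 * c8)) by (apply Rmult_le_pos; nra); lra).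
      set (eta := e / C).
      assert (Heta : 0 < eta) by (unfold eta; apply Rdiv_lt_0_compat; lra).
      assert (HCe : (C - 1) * eta <= e).
      { unfold eta. replace ((C - 1) * (e / C)) with (e - e / C) by (field; lra).
        assert (0 < e / C) by (apply Rdiv_lt_0_compat; lra). lra. }
      destruct (tailL r _ I ltac:(lra) HG eta Heta) as [dL [HdL HTL]].
      destruct (tailR r _ I ltac:(lra) HG eta Heta) as [dR [HdR HTR]].
      destruct (V2L r _ I ltac:(lra) HG (eta / 2) ltac:(lra)) as [hL [HhL HVL]].
      destruct (V2R r _ I ltac:(lra) HG (eta / 2) ltac:(lra)) as [hR [HhR HVR]].
      destruct (small_inv (Rmin (Rmin dL dR) (Rmin hL hR))) as [N0 [HN0 HN0']].
      { repeat apply Rmin_glb_lt; lra. }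
      exists N0. intros n Hn Hn4.
      pose proof (HN0' n Hn) as Hsm.
      pose proof (Rmin_l (Rmin dL dR) (Rmin hL hR)). pose proof (Rmin_r (Rmin dL dR) (Rmin hL hR)).
      pose proof (Rmin_l dL dR). pose proof (Rmin_r dL dR). pose proof (Rmin_l hL hR). pose proof (Rmin_r hL hR).
      assert (Hnr : 4 <= INR n) by (apply nR; auto).
      remember (INR 1 / INR n) as h1 eqn:Eh1.
      assert (Hh1 : h1 = 1 / INR n) by (rewrite Eh1; reflexivity).
      assert (Hh1p : 0 < h1) by (rewrite Hh1; apply Rdiv_lt_0_compat; lra).
      assert (Hh2 : INR (n - 1) / INR n = 1 - h1) by (rewrite Hh1, minus_INR by lia; simpl; field; lra).
      assert (HtauL : forall a, 0 < a -> a <= INR 1 / INR n ->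
                RInt (fun t => rpow (Rabs (qf F t)) r) a (INR 1 / INR n) <= eta).
      { intros a Ha Ha1. rewrite <- Eh1 in *. apply HTL; auto. lra. }
      assert (HtauR : forall b, INR (n - 1) / INR n <= b -> b < 1 ->
                RInt (fun t => rpow (Rabs (qf F t)) r) (INR (n - 1) / INR n) b <= eta).
      { intros b Hb1 Hb. rewrite Hh2 in *. apply HTR; auto; lra. }
      pose proof (Hsort n ltac:(lia)) as Hxn. pose proof (Hmin n ltac:(lia)) as Hmn.
      set (q := qf F) in *.
      assert (PcL : h1 * rpow (Rabs (q h1)) r <= eta / 2) by (apply HVL; lra).
      assert (PmL : h1 * rpow (Rabs (q (h1 / 2))) r <= eta).
      { assert (h1 / 2 * rpow (Rabs (q (h1 / 2))) r <= eta / 2) by (apply HVL; lra). lra. }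
      assert (PcR : h1 * rpow (Rabs (q (INR (n - 1) / INR n))) r <= eta / 2) by (rewrite Hh2; apply HVR; lra).
      assert (PmR : h1 * rpow (Rabs (q (1 - h1 / 2))) r <= eta).
      { assert (h1 / 2 * rpow (Rabs (q (1 - h1 / 2))) r <= eta / 2) by (apply HVR; lra). lra. }
      assert (G1 : 0 <= h1 * rpow (Rabs (q h1)) r) by (pose proof (rpow_ge0 (Rabs (q h1)) r); nra).
      assert (G2 : 0 <= h1 * rpow (Rabs (q (INR (n - 1) / INR n))) r)
        by (pose proof (rpow_ge0 (Rabs (q (INR (n - 1) / INR n))) r); nra).
      assert (HBRL : c2 * (h1 * rpow (Rabs (q h1)) r + eta) <= c2 * (2 * eta)) by (apply Rmult_le_compat_l; lra).
      assert (HBRR : c2 * (h1 * rpow (Rabs (q (INR (n - 1) / INR n))) r + eta) <= c2 * (2 * eta))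
        by (apply Rmult_le_compat_l; lra).
      split.
      * intros u v Hu Huv Hv.
        eapply Rle_trans; [apply (EL_final F r s I n (x n) eta eta HF Hr Hs Hsr HG Hn4 Hxn Hmn HtauL HtauR u v Hu Huv); rewrite <- Eh1; lra|].
        rewrite <- Eh1. fold q c2 c3 c8.
        eapply Rle_trans; [apply (combo c2 c3 c8 _ (h1 * rpow (Rabs (q h1)) r) (h1 * rpow (Rabs (q (h1 / 2))) r) _ _ eta); auto; try lra|].
        -- pose proof (rpow_diff_le (q h1) (q (h1 / 2)) r ltac:(lra)). fold c2 in H5.
           replace (c2 * (h1 * rpow (Rabs (q h1)) r + h1 * rpow (Rabs (q (h1 / 2))) r)) with
             (h1 * (c2 * (rpow (Rabs (q h1)) r + rpow (Rabs (q (h1 / 2))) r))) by ring.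
           apply Rmult_le_compat_l; lra.
        -- replace (c3 * c2 * (4 + 16 * c8)) with (C - 1) by (unfold C; ring). exact HCe.
      * intros u v Hu Huv Hv.
        eapply Rle_trans; [apply (ER_final F r s I n (x n) eta eta HF Hr Hs Hsr HG Hn4 Hxn Hmn HtauL HtauR u v); auto; rewrite Hh2; lra|].
        rewrite <- Eh1. fold q c2 c3 c8.
        eapply Rle_trans; [apply (combo c2 c3 c8 _ (h1 * rpow (Rabs (q (INR (n - 1) / INR n))) r) (h1 * rpow (Rabs (q (1 - h1 / 2))) r) _ _ eta); auto; try lra|].
        -- pose proof (rpow_diff_le (q (1 - h1 / 2)) (q (INR (n - 1) / INR n)) r ltac:(lra)). fold c2 in H5.
           replace (c2 * (h1 * rpow (Rabs (q (INR (n - 1) / INR n))) r + h1 * rpow (Rabs (q (1 - h1 / 2))) r)) with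
             (h1 * (c2 * (rpow (Rabs (q (1 - h1 / 2))) r + rpow (Rabs (q (INR (n - 1) / INR n))) r))) by ring.
           apply Rmult_le_compat_l; lra.
        -- replace (c3 * c2 * (4 + 16 * c8)) with (C - 1) by (unfold C; ring). exact HCe.
  - exists D. split; [exact HD1|exact HD2].
Qed.

Theorem corollary5 (r s : R) (F : R -> R) (x : nat -> nat -> R) :
  1 <= r -> is_cdf F -> in_Pr r F -> 1 <= s -> s <= r ->
  (forall n, (1 <= n)%nat ->
     in_Xi n (x n) /\
     forall (y : nat -> R) (D1 D2 : R), in_Xi n y ->
       dist_r s (emp_cdf n (x n)) F D1 ->
       dist_r s (emp_cdf n y) F D2 -> D1 <= D2) ->
  (exists D : nat -> R,
     (forall n, (1 <= n)%nat -> dist_r r (emp_cdf n (x n)) F (D n)) /\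
     Un_cv D 0) /\
  (exists D : nat -> R,
     (forall n, (1 <= n)%nat ->
        dist_r r (emp_cdf n (fun i => qf F ((2 * INR i + 1) / (2 * INR n)))) F (D n)) /\
     Un_cv D 0).
Proof.
  intros Hr HF HP Hs Hsr Hx. split.
  - apply (part1 F r s x); auto.
  - apply (part2 F r); auto.
Qed.
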